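(* Let $L>0$, $T>0$, $K,M$ positive integers, $\Delta x=L/K$, $\Delta t=T/M$. Let $(E,N,V)$ be a sufficiently smooth solution of the periodic Zakharov system $\mathrm{i}E_t+E_{xx}=NE$, $N_t=V_{xx}$, $V_t=N+|E|^2$, $V(0,0)=0$ ($L$-periodic in $x$, $\int_0^LN_t(0,x)\,\mathrm{d}x=0$), and let $(E^{(m)},N^{(m)},V^{(m)})$, $m=0,\dots,M$, solve the DVDM scheme $$\begin{cases}\mathrm{i}\,\delta_t^+E^{(m)}_k=-\delta_x^{\langle 2\rangle}\mu_t^+E^{(m)}_k+(\mu_t^+N^{(m)}_k)(\mu_t^+E^{(m)}_k),\\ \delta_t^+N^{(m)}_k=\delta_x^{\langle 2\rangle}\mu_t^+V^{(m)}_k,\\ \delta_t^+V^{(m)}_k=\mu_t^+N^{(m)}_k+\mu_t^+|E^{(m)}_k|^2,\end{cases}$$ with $E^{(0)}_k=E(0,k\Delta x)$, $N^{(0)}_k=N(0,k\Delta x)$, $|V^{(0)}_k-V(0,k\Delta x)|\le C_V(\Delta x)^2$ ($C_V$ independent of $\Delta x$). Let $c_0>0$ be a constant not depending on $\Delta t,\Delta x$ such that $\|\tau_E^{(m)}\|,\|\delta_x^+\tau_E^{(m)}\|,\|\tau_N^{(m)}\|,\|\delta_x^+\tau_V^{(m)}\|\le c_0((\Delta t)^2+(\Delta x)^2)$ for $m=0,\dots,M-1$. Define $$A^{(m)}:=\langle e_N^{(m)}+\tilde N^{(m)},|e_E^{(m)}|^2\rangle+2\,\mathrm{Re}\langle e_E^{(m)},\tilde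 E^{(m)}e_N^{(m)}\rangle.$$ Suppose $\Delta t,\Delta x$ are sufficiently small. Then, for $m=0,\dots,M-1$, $$\delta_t^+\|\delta_x^+e_E^{(m)}\|^2\le-\delta_t^+A^{(m)}+C_3\big(\mathcal{E}_e^{(m+1)}+\mathcal{E}_e^{(m)}\big)+4c_0^2\big((\Delta x)^2+(\Delta t)^2\big)^2$$ for a constant $C_3>0$ not depending on $\Delta t$ and $\Delta x$.
   Context: Grid functions are $K$-periodic in $k$. Operators: $\delta_x^+u_k=(u_{k+1}-u_k)/\Delta x$, $\delta_x^{\langle 2\rangle}u_k=(u_{k+1}-2u_k+u_{k-1})/(\Delta x)^2$, $\delta_t^+u^{(m)}=(u^{(m+1)}-u^{(m)})/\Delta t$, $\mu_t^+u^{(m)}=(u^{(m+1)}+u^{(m)})/2$. Inner product $\langle v,w\rangle=\sum_{k=1}^Kv_k\bar w_k\Delta x$, norm $\|v\|=\langle v,v\rangle^{1/2}$. Products and $|\cdot|^2$ of grid functions are componentwise. Exact values: $\tilde E^{(m)}_k=E(m\Delta t,k\Delta x)$, $\tilde N^{(m)}_k$, $\tilde V^{(m)}_k$ likewise; errors $e_E^{(m)}=E^{(m)}-\tilde E^{(m)}$, $e_N^{(m)}=N^{(m)}-\tilde N^{(m)}$, $e_V^{(m)}=V^{(m)}-\tilde V^{(m)}$. Local truncation errors $\tau_E,\tau_N,\tau_V$ are defined by $\mathrm{i}\delta_t^+\tilde E^{(m)}_k=-\delta_x^{\langle 2\rangle}\mu_t^+\tilde E^{(m)}_k+(\mu_t^+\tilde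 N^{(m)}_k)(\mu_t^+\tilde E^{(m)}_k)+\tau^{(m)}_{E,k}$, $\delta_t^+\tilde N^{(m)}_k=\delta_x^{\langle 2\rangle}\mu_t^+\tilde V^{(m)}_k+\tau^{(m)}_{N,k}$, $\delta_t^+\tilde V^{(m)}_k=\mu_t^+\tilde N^{(m)}_k+\mu_t^+|\tilde E^{(m)}_k|^2+\tau^{(m)}_{V,k}$. Also $\mathcal{E}_e^{(m)}=\|e_E^{(m)}\|^2+\|\delta_x^+e_E^{(m)}\|^2+\|e_N^{(m)}\|^2+\|\delta_x^+e_V^{(m)}\|^2$. *)

(* Defs.v *)
From Stdlib Require Import Reals ZArith.
From Coquelicot Require Import Coquelicot.

Open Scope R_scope.

Definition pt (f : R -> R -> R) (t x : R) : R := Derive (fun s => f s x) t.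
Definition px (f : R -> R -> R) (t x : R) : R := Derive (fun y => f t y) x.

Definition ReF (E : R -> R -> C) : R -> R -> R := fun t x => Re (E t x).
Definition ImF (E : R -> R -> C) : R -> R -> R := fun t x => Im (E t x).

Definition ptC (E : R -> R -> C) (t x : R) : C := (pt (ReF E) t x, pt (ImF E) t x).
Definition pxC (E : R -> R -> C) (t x : R) : C := (px (ReF E) t x, px (ImF E) t x).

Definition smooth_strip (a b : R) (f : R -> R -> R) : Prop :=
  exists D : nat -> nat -> R -> R -> R,
    D 0%nat 0%nat = f /\
    forall (i j : nat) (t x : R), a < t < b ->
      is_derive (fun s => D i j s x) t (D (S i) j t x) /\
      is_derive (fun y => D i j t y) x (D i (S j) t x) /\
      continuous (fun p : R * R => D i j (fst p) (snd p)) (t, x).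

Definition zakharov_solution (L T : R) (E : R -> R -> C) (N V : R -> R -> R) : Prop :=
  (exists eps : R, 0 < eps /\
     smooth_strip (- eps) (T + eps) (ReF E) /\
     smooth_strip (- eps) (T + eps) (ImF E) /\
     smooth_strip (- eps) (T + eps) N /\
     smooth_strip (- eps) (T + eps) V) /\
  (forall t x, 0 <= t <= T ->
     E t (x + L) = E t x /\ N t (x + L) = N t x /\ V t (x + L) = V t x) /\
  (forall t x, 0 <= t <= T ->
     (Ci * ptC E t x + pxC (pxC E) t x)%C = (RtoC (N t x) * E t x)%C /\
     pt N t x = px (px V) t x /\
     pt V t x = N t x + (Cmod (E t x)) ^ 2) /\
  V 0 0 = 0 /\
  RInt (fun x => pt N 0 x) 0 L = 0.

Definition periodicC (K : nat) (u : Z -> C) : Prop := forall k, u (k + Z.of_nat K)%Z = u k.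
Definition periodicR (K : nat) (u : Z -> R) : Prop := forall k, u (k + Z.of_nat K)%Z = u k.

(** sum_{k=1}^{K} f k *)
Fixpoint sumC (K : nat) (f : Z -> C) : C :=
  match K with O => RtoC 0 | S K' => (sumC K' f + f (Z.of_nat (S K')))%C end.
Fixpoint sumR (K : nat) (f : Z -> R) : R :=
  match K with O => 0 | S K' => sumR K' f + f (Z.of_nat (S K')) end.

Definition ipC (K : nat) (dx : R) (v w : Z -> C) : C :=
  (sumC K (fun k => v k * Cconj (w k)) * RtoC dx)%C.
Definition ipR (K : nat) (dx : R) (v w : Z -> R) : R :=
  sumR K (fun k => v k * w k) * dx.
Definition normC (K : nat) (dx : R) (v : Z -> C) : R := sqrt (Re (ipC K dx v v)).
Definition normR (K : nat) (dx : R) (v : Z -> R) : R := sqrt (ipR K dx v v).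

Definition dxpC (dx : R) (u : Z -> C) : Z -> C :=
  fun k => ((u (k + 1)%Z - u k) / RtoC dx)%C.
Definition dxpR (dx : R) (u : Z -> R) : Z -> R :=
  fun k => (u (k + 1)%Z - u k) / dx.
Definition dx2C (dx : R) (u : Z -> C) : Z -> C :=
  fun k => ((u (k + 1)%Z - RtoC 2 * u k + u (k - 1)%Z) / RtoC (dx ^ 2))%C.
Definition dx2R (dx : R) (u : Z -> R) : Z -> R :=
  fun k => (u (k + 1)%Z - 2 * u k + u (k - 1)%Z) / (dx ^ 2).
Definition dtpC (dt : R) (u : nat -> Z -> C) (m : nat) : Z -> C :=
  fun k => ((u (S m) k - u m k) / RtoC dt)%C.
Definition dtpR (dt : R) (u : nat -> Z -> R) (m : nat) : Z -> R :=
  fun k => (u (S m) k - u m k) / dt.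
Definition mutC (u : nat -> Z -> C) (m : nat) : Z -> C :=
  fun k => ((u (S m) k + u m k) / RtoC 2)%C.
Definition mutR (u : nat -> Z -> R) (m : nat) : Z -> R :=
  fun k => (u (S m) k + u m k) / 2.
Definition dtps (dt : R) (a : nat -> R) (m : nat) : R := (a (S m) - a m) / dt.

Definition abs2 (u : Z -> C) : Z -> R := fun k => (Cmod (u k)) ^ 2.

Definition exactC (dt dx : R) (E : R -> R -> C) : nat -> Z -> C :=
  fun m k => E (INR m * dt) (IZR k * dx).
Definition exactR (dt dx : R) (N : R -> R -> R) : nat -> Z -> R :=
  fun m k => N (INR m * dt) (IZR k * dx).

Definition dvdm_scheme (M : nat) (dt dx : R)
    (Es : nat -> Z -> C) (Ns Vs : nat -> Z -> R) : Prop :=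
  forall (m : nat) (k : Z), (m < M)%nat ->
    (Ci * dtpC dt Es m k)%C =
      (- dx2C dx (mutC Es m) k + RtoC (mutR Ns m k) * mutC Es m k)%C /\
    dtpR dt Ns m k = dx2R dx (mutR Vs m) k /\
    dtpR dt Vs m k = mutR Ns m k + mutR (fun j => abs2 (Es j)) m k.

Definition tauE (dt dx : R) (E : R -> R -> C) (N : R -> R -> R) (m : nat) : Z -> C :=
  let Et := exactC dt dx E in let Nt := exactR dt dx N in
  fun k => (Ci * dtpC dt Et m k + dx2C dx (mutC Et m) k
            - RtoC (mutR Nt m k) * mutC Et m k)%C.
Definition tauN (dt dx : R) (N V : R -> R -> R) (m : nat) : Z -> R :=
  fun k => dtpR dt (exactR dt dx N) m k - dx2R dx (mutR (exactR dt dx V) m) k.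
Definition tauV (dt dx : R) (E : R -> R -> C) (N V : R -> R -> R) (m : nat) : Z -> R :=
  fun k => dtpR dt (exactR dt dx V) m k - mutR (exactR dt dx N) m k
           - mutR (fun j => abs2 (exactC dt dx E j)) m k.

Definition errC (u v : nat -> Z -> C) : nat -> Z -> C := fun m k => (u m k - v m k)%C.
Definition errR (u v : nat -> Z -> R) : nat -> Z -> R := fun m k => u m k - v m k.

Definition err_energy (K : nat) (dt dx : R) (E : R -> R -> C) (N V : R -> R -> R)
    (Es : nat -> Z -> C) (Ns Vs : nat -> Z -> R) (m : nat) : R :=
  let eE := errC Es (exactC dt dx E) m in
  let eN := errR Ns (exactR dt dx N) m in
  let eV := errR Vs (exactR dt dx V) m in
  (normC K dx eE) ^ 2 + (normC K dx (dxpC dx eE)) ^ 2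
  + (normR K dx eN) ^ 2 + (normR K dx (dxpR dx eV)) ^ 2.

Definition Aterm (K : nat) (dt dx : R) (E : R -> R -> C) (N : R -> R -> R)
    (Es : nat -> Z -> C) (Ns : nat -> Z -> R) (m : nat) : R :=
  let eE := errC Es (exactC dt dx E) m in
  let eN := errR Ns (exactR dt dx N) m in
  ipR K dx (fun k => eN k + exactR dt dx N m k) (abs2 eE)
  + 2 * Re (ipC K dx eE (fun k => (exactC dt dx E m k * RtoC (eN k))%C)).

(* Main.v *)
Require Import Defs.
From Stdlib Require Import Reals ZArith Lra Lia Psatz Classical ClassicalEpsilon List.
From Coquelicot Require Import Coquelicot.
Open Scope R_scope.

Definition per (K : nat) (f : Z -> R) : Prop := forall k, f (k + Z.of_nat K)%Z = f k.
Definition dX (dx : R) (f : Z -> R) (k : Z) : R := (f (k + 1)%Z - f k) / dx.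
Definition D2 (dx : R) (f : Z -> R) (k : Z) : R := (f (k + 1)%Z - 2 * f k + f (k - 1)%Z) / dx ^ 2.

Lemma sumR_ext : forall K f g, (forall k, f k = g k) -> sumR K f = sumR K g.
Proof. induction K; intros f g H; simpl; auto. rewrite (IHK f g H), H; auto. Qed.

Lemma sumR_plus : forall K f g, sumR K (fun k => f k + g k) = sumR K f + sumR K g.
Proof. induction K; intros; simpl; [lra|]. rewrite IHK; lra. Qed.

Lemma sumR_minus : forall K f g, sumR K (fun k => f k - g k) = sumR K f - sumR K g.
Proof. induction K; intros; simpl; [lra|]. rewrite IHK; lra. Qed.

Lemma sumR_scal : forall K c f, sumR K (fun k => c * f k) = c * sumR K f.
Proof. induction K; intros; simpl; [lra|]. rewrite IHK; lra. Qed.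

Lemma sumR_le : forall K f g, (forall k, f k <= g k) -> sumR K f <= sumR K g.
Proof. induction K; intros f g H; simpl sumR; [lra|]. apply Rplus_le_compat; auto. Qed.

Lemma sumR_nonneg : forall K f, (forall k, 0 <= f k) -> 0 <= sumR K f.
Proof. intros. assert (H0: sumR K (fun _ => 0) = 0).
  { clear H. induction K; simpl; [auto|rewrite IHK; lra]. }
  rewrite <- H0. apply sumR_le; auto. Qed.

Lemma sumR_const : forall K c, sumR K (fun _ => c) = INR K * c.
Proof. induction K; intros; simpl sumR; [simpl; lra|]. rewrite IHK, S_INR; lra. Qed.

Lemma sumR_shift_gen : forall n f, sumR n (fun k => f (k + 1)%Z) = sumR n f - f 1%Z + f (Z.of_nat n + 1)%Z.
Proof. induction n; intros; cbn [sumR].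
  - replace (Z.of_nat 0 + 1)%Z with 1%Z by reflexivity. lra.
  - rewrite IHn. rewrite Nat2Z.inj_succ. unfold Z.succ. lra. Qed.

Lemma sumR_shift : forall K f, per K f -> sumR K (fun k => f (k + 1)%Z) = sumR K f.
Proof. intros K f H. rewrite sumR_shift_gen.
  replace (Z.of_nat K + 1)%Z with (1 + Z.of_nat K)%Z by ring. rewrite H. ring. Qed.

Lemma per_p1 : forall K f, per K f -> forall k, f (k + Z.of_nat K + 1)%Z = f (k + 1)%Z.
Proof. intros. replace (k + Z.of_nat K + 1)%Z with (k + 1 + Z.of_nat K)%Z by ring. apply H. Qed.
Lemma per_m1 : forall K f, per K f -> forall k, f (k + Z.of_nat K - 1)%Z = f (k - 1)%Z.
Proof. intros. replace (k + Z.of_nat K - 1)%Z with (k - 1 + Z.of_nat K)%Z by ring. apply H. Qed.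

Lemma telescope : forall K h, per K h -> sumR K (fun k => h (k + 1)%Z - h k) = 0.
Proof. intros. rewrite sumR_minus, sumR_shift; auto; ring. Qed.

Lemma sbp : forall K dx u w, dx <> 0 -> per K u -> per K w ->
  sumR K (fun k => D2 dx u k * w k + dX dx u k * dX dx w k) = 0.
Proof.
  intros K dx u w Hdx Hu Hw.
  set (h := fun k => (u k - u (k - 1)%Z) * w k / dx ^ 2).
  rewrite (sumR_ext _ _ (fun k => h (k + 1)%Z - h k)).
  - apply telescope. intro k. unfold h. rewrite Hu, Hw, (per_m1 _ _ Hu). auto.
  - intro k. unfold h, D2, dX. replace (k + 1 - 1)%Z with k by ring. field. auto.
Qed.

Lemma abs_b : forall a b, Rabs a <= b -> - b <= a <= b.
Proof. intros a b. unfold Rabs; destruct (Rcase_abs a); lra. Qed.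

Lemma per_nat : forall K f, per K f -> forall (n : nat) k, f (k + Z.of_nat K * Z.of_nat n)%Z = f k.
Proof. intros K f H n. induction n; intro k.
  - replace (k + Z.of_nat K * Z.of_nat 0)%Z with k by lia. auto.
  - replace (k + Z.of_nat K * Z.of_nat (S n))%Z with ((k + Z.of_nat K * Z.of_nat n) + Z.of_nat K)%Z by lia.
    rewrite H. auto. Qed.

Lemma per_int : forall K f, per K f -> forall (z : Z) k, f (k + Z.of_nat K * z)%Z = f k.
Proof. intros K f H z k. destruct (Z_le_gt_dec 0 z).
  - rewrite <- (Z2Nat.id z) by lia. apply per_nat; auto.
  - rewrite <- (per_nat K f H (Z.to_nat (- z)) (k + Z.of_nat K * z)%Z).
    f_equal. rewrite Z2Nat.id by lia. ring. Qed.

Lemma per_all : forall K f (P : R -> Prop), (1 <= K)%nat -> per K f ->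
  (forall i, (1 <= i <= K)%nat -> P (f (Z.of_nat i))) -> forall k, P (f k).
Proof. intros K f P HK H Hi k.
  set (r := ((k - 1) mod Z.of_nat K)%Z). set (q := ((k - 1) / Z.of_nat K)%Z).
  assert (Hr : (0 <= r < Z.of_nat K)%Z) by (apply Z.mod_pos_bound; lia).
  assert (Hk : k = ((r + 1) + Z.of_nat K * q)%Z).
  { unfold r, q. pose proof (Z.div_mod (k - 1) (Z.of_nat K)). lia. }
  rewrite Hk, per_int; auto.
  replace (r + 1)%Z with (Z.of_nat (S (Z.to_nat r))) by lia. apply Hi. lia. Qed.

Lemma sumR_abs : forall n d, Rabs (sumR n d) <= sumR n (fun k => Rabs (d k)).
Proof. induction n; intros; cbn [sumR]. rewrite Rabs_R0; lra.
  eapply Rle_trans. apply Rabs_triang. specialize (IHn d). lra. Qed.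

Lemma sumR_mono_n : forall n m f, (n <= m)%nat -> (forall k, 0 <= f k) -> sumR n f <= sumR m f.
Proof. intros n m f H Hf. induction H. lra. cbn [sumR]. specialize (Hf (Z.of_nat (S m))). lra. Qed.

Lemma partial_tel : forall n g, sumR n (fun j => g (j + 1)%Z - g j) = g (Z.of_nat n + 1)%Z - g 1%Z.
Proof. intros. rewrite sumR_minus, sumR_shift_gen. ring. Qed.

Lemma osc_bound : forall K g, (1 <= K)%nat -> per K g ->
  forall k j, g k <= g j + 2 * sumR K (fun i => Rabs (g (i + 1)%Z - g i)).
Proof. intros K g HK Hg.
  set (D := sumR K (fun i => Rabs (g (i + 1)%Z - g i))).
  assert (H1 : forall k, Rabs (g k - g 1%Z) <= D).
  { apply (per_all K g (fun y => Rabs (y - g 1%Z) <= D)); auto.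
    intros i Hi. destruct i. lia.
    replace (Z.of_nat (S i)) with (Z.of_nat i + 1)%Z by lia.
    rewrite <- partial_tel. eapply Rle_trans. apply sumR_abs.
    apply sumR_mono_n. lia. intros; apply Rabs_pos. }
  intros k j. specialize (H1 k) as Hk. specialize (H1 j) as Hj.
  apply abs_b in Hk. apply abs_b in Hj. lra. Qed.

Lemma amgm_eps : forall eps a b c d, 0 < eps ->
  Rabs (a * b + c * d) <= eps / 2 * (a ^ 2 + c ^ 2) + / (2 * eps) * (b ^ 2 + d ^ 2).
Proof. intros eps a b c d He.
  assert (H1: 0 <= (eps * a - b) ^ 2) by apply pow2_ge_0. assert (H2: 0 <= (eps * a + b) ^ 2) by apply pow2_ge_0.
  assert (H3: 0 <= (eps * c - d) ^ 2) by apply pow2_ge_0. assert (H4: 0 <= (eps * c + d) ^ 2) by apply pow2_ge_0.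
  assert (E: eps / 2 * (a ^ 2 + c ^ 2) + / (2 * eps) * (b ^ 2 + d ^ 2)
    = / (2 * eps) * (eps^2 * a^2 + b^2 + (eps^2 * c^2 + d^2))) by (field; lra).
  rewrite E. apply Rabs_le. assert (Hi : 0 < / (2 * eps)) by (apply Rinv_0_lt_compat; lra).
  split.
  - assert (-(2*eps*(a*b+c*d)) <= eps^2*a^2+b^2+(eps^2*c^2+d^2)) by nra.
    replace (a * b + c * d) with (/ (2*eps) * (2*eps*(a*b+c*d))) by (field; lra). nra.
  - assert ((2*eps*(a*b+c*d)) <= eps^2*a^2+b^2+(eps^2*c^2+d^2)) by nra.
    replace (a * b + c * d) with (/ (2*eps) * (2*eps*(a*b+c*d))) by (field; lra). nra.
Qed.

Lemma sumR_lin : forall K a b f g, sumR K (fun j => a * f j + b * g j) = a * sumR K f + b * sumR K g.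
Proof. intros. rewrite sumR_plus, !sumR_scal. auto. Qed.

Lemma sobolev : forall K dx p q eps, (1 <= K)%nat -> 0 < dx -> 0 < eps -> per K p -> per K q ->
  forall k, p k ^ 2 + q k ^ 2 <=
    sumR K (fun j => p j ^ 2 + q j ^ 2) / INR K
    + eps * (sumR K (fun j => dX dx p j ^ 2 + dX dx q j ^ 2) * dx)
    + 4 / eps * (sumR K (fun j => p j ^ 2 + q j ^ 2) * dx).
Proof.
  intros K dx p q eps HK Hdx He Hp Hq k.
  set (g := fun j => p j ^ 2 + q j ^ 2).
  assert (Hg : per K g) by (intro j; unfold g; rewrite Hp, Hq; auto).
  set (D := sumR K (fun i => Rabs (g (i + 1)%Z - g i))).
  assert (HKpos : 0 < INR K) by (apply lt_0_INR; lia).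
  assert (H1 : INR K * g k <= sumR K g + INR K * (2 * D)).
  { rewrite <- !sumR_const, <- sumR_plus. apply sumR_le. intro j.
    apply osc_bound; auto. }
  assert (H2 : D <= eps / 2 * (sumR K (fun j => dX dx p j ^ 2 + dX dx q j ^ 2) * dx)
                   + 2 / eps * (sumR K g * dx)).
  { unfold D.
    assert (E2 : eps / 2 * (sumR K (fun j => dX dx p j ^ 2 + dX dx q j ^ 2) * dx) + 2 / eps * (sumR K g * dx)
      = sumR K (fun j => (eps / 2 * dx) * (dX dx p j ^ 2 + dX dx q j ^ 2) + (dx / eps) * (g (j + 1)%Z + g j))).
    { rewrite sumR_lin, !sumR_plus, sumR_shift; auto. field; lra. }
    rewrite E2.
    apply sumR_le. intro j. unfold g, dX.
    replace (p (j + 1)%Z ^ 2 + q (j + 1)%Z ^ 2 - (p j ^ 2 + q j ^ 2))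
      with (dx * ((p (j + 1)%Z - p j) / dx * (p (j+1)%Z + p j) + (q (j + 1)%Z - q j) / dx * (q (j+1)%Z + q j)))
      by (field; lra).
    rewrite Rabs_mult, Rabs_pos_eq by lra.
    pose proof (amgm_eps eps ((p (j + 1)%Z - p j) / dx) (p (j+1)%Z + p j) ((q (j + 1)%Z - q j) / dx) (q (j+1)%Z + q j) He).
    assert (Hi : 0 < / (2 * eps)) by (apply Rinv_0_lt_compat; lra).
    set (B := (p (j+1)%Z + p j)^2 + (q (j+1)%Z + q j)^2).
    set (G := p (j + 1)%Z ^ 2 + q (j + 1)%Z ^ 2 + (p j ^ 2 + q j ^ 2)).
    set (A := ((p (j + 1)%Z - p j) / dx) ^ 2 + ((q (j + 1)%Z - q j) / dx) ^ 2).
    assert (HB : B <= 2 * G).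
    { unfold B, G. pose proof (pow2_ge_0 (p (j+1)%Z - p j)); pose proof (pow2_ge_0 (q (j+1)%Z - q j)); nra. }
    eapply Rle_trans. apply Rmult_le_compat_l. lra. apply H.
    assert (dx * / (2 * eps) * B <= dx * / (2 * eps) * (2 * G)).
    { apply Rmult_le_compat_l; auto. apply Rmult_le_pos; lra. }
    replace (dx / eps * G) with (dx * / (2 * eps) * (2 * G)) by (field; lra).
    fold A. match goal with |- ?l <= _ => replace l with (eps / 2 * dx * A + dx * / (2 * eps) * B) by (unfold A, B; ring) end. lra. }
  fold g. change (p k ^ 2 + q k ^ 2) with (g k). apply (Rmult_le_reg_l (INR K)); auto.
  replace (INR K * (sumR K g / INR K + eps * (sumR K (fun j => dX dx p j ^ 2 + dX dx q j ^ 2) * dx) + 4 / eps * (sumR K g * dx)))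
    with (sumR K g + INR K * 2 * (eps / 2 * (sumR K (fun j => dX dx p j ^ 2 + dX dx q j ^ 2) * dx) + 2 / eps * (sumR K g * dx))) by (field; lra).
  assert (INR K * (2 * D) <= INR K * 2 * (eps / 2 * (sumR K (fun j => dX dx p j ^ 2 + dX dx q j ^ 2) * dx) + 2 / eps * (sumR K g * dx))).
  { rewrite Rmult_assoc. apply Rmult_le_compat_l; lra. }
  lra.
Qed.

Definition energy (K : nat) (dx : R) (p q N V : Z -> R) : R :=
  sumR K (fun k => dX dx p k ^ 2 + dX dx q k ^ 2) + sumR K (fun k => N k * (p k ^ 2 + q k ^ 2))
  + / 2 * sumR K (fun k => N k ^ 2) + / 2 * sumR K (fun k => dX dx V k ^ 2).

Definition mass (K : nat) (p q : Z -> R) : R := sumR K (fun k => p k ^ 2 + q k ^ 2).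

Lemma energy_sum : forall K dx p q N V, energy K dx p q N V =
  sumR K (fun k => dX dx p k ^ 2 + dX dx q k ^ 2 + N k * (p k ^ 2 + q k ^ 2) + / 2 * N k ^ 2 + / 2 * dX dx V k ^ 2).
Proof. intros. unfold energy. rewrite !sumR_plus, !sumR_scal. auto. Qed.

Lemma conserve : forall K dx dt (p0 q0 N0 V0 p1 q1 N1 V1 : Z -> R),
  dx <> 0 -> dt <> 0 ->
  per K p0 -> per K q0 -> per K N0 -> per K V0 -> per K p1 -> per K q1 -> per K N1 -> per K V1 ->
  (forall k, - (q1 k - q0 k) / dt = - D2 dx (fun j => (p1 j + p0 j) / 2) k + (N1 k + N0 k) / 2 * ((p1 k + p0 k) / 2)) ->
  (forall k, (p1 k - p0 k) / dt = - D2 dx (fun j => (q1 j + q0 j) / 2) k + (N1 k + N0 k) / 2 * ((q1 k + q0 k) / 2)) ->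
  (forall k, (N1 k - N0 k) / dt = D2 dx (fun j => (V1 j + V0 j) / 2) k) ->
  (forall k, (V1 k - V0 k) / dt = (N1 k + N0 k) / 2 + (p1 k ^ 2 + q1 k ^ 2 + (p0 k ^ 2 + q0 k ^ 2)) / 2) ->
  mass K p1 q1 = mass K p0 q0 /\ energy K dx p1 q1 N1 V1 = energy K dx p0 q0 N0 V0.
Proof.
  intros K dx dt p0 q0 N0 V0 p1 q1 N1 V1 Hdx Hdt Hp0 Hq0 HN0 HV0 Hp1 Hq1 HN1 HV1 HE1 HE2 HN HV.
  set (mp := fun j => (p1 j + p0 j) / 2). set (mq := fun j => (q1 j + q0 j) / 2).
  set (mV := fun j => (V1 j + V0 j) / 2).
  fold mp in HE1. fold mq in HE2. fold mV in HN.
  assert (Pmp : per K mp) by (intro j; unfold mp; rewrite Hp1, Hp0; auto).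
  assert (Pmq : per K mq) by (intro j; unfold mq; rewrite Hq1, Hq0; auto).
  assert (PmV : per K mV) by (intro j; unfold mV; rewrite HV1, HV0; auto).
  assert (Hd1 : forall k, D2 dx mp k = (q1 k - q0 k) / dt + (N1 k + N0 k) / 2 * ((p1 k + p0 k) / 2)).
  { intro k. specialize (HE1 k). lra. }
  assert (Hd2 : forall k, D2 dx mq k = - ((p1 k - p0 k) / dt) + (N1 k + N0 k) / 2 * ((q1 k + q0 k) / 2)).
  { intro k. specialize (HE2 k). lra. }
  assert (Hd3 : forall k, D2 dx mV k = (N1 k - N0 k) / dt) by (intro k; rewrite HN; auto).
  split.
  - set (Ra := fun k => D2 dx mq k * mp k + dX dx mq k * dX dx mp k).
    set (Rb := fun k => D2 dx mp k * mq k + dX dx mp k * dX dx mq k).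
    assert (Sa : sumR K Ra = 0) by (apply sbp; auto).
    assert (Sb : sumR K Rb = 0) by (apply sbp; auto).
    unfold mass. apply Rminus_diag_uniq. rewrite <- sumR_minus.
    rewrite (sumR_ext _ _ (fun k => (2 * dt) * (Rb k - Ra k))).
    + rewrite sumR_scal, sumR_minus, Sa, Sb. ring.
    + intro k. unfold Ra, Rb. rewrite Hd1, Hd2. unfold mp, mq, dX. field. auto.
  - set (Rp := fun k => D2 dx mp k * (p1 k - p0 k) + dX dx mp k * dX dx (fun j => p1 j - p0 j) k).
    set (Rq := fun k => D2 dx mq k * (q1 k - q0 k) + dX dx mq k * dX dx (fun j => q1 j - q0 j) k).
    set (RV := fun k => D2 dx mV k * (V1 k - V0 k) + dX dx mV k * dX dx (fun j => V1 j - V0 j) k).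
    assert (Sp : sumR K Rp = 0).
    { apply (sbp K dx mp (fun j => p1 j - p0 j)); auto. intro j; rewrite Hp1, Hp0; auto. }
    assert (Sq : sumR K Rq = 0).
    { apply (sbp K dx mq (fun j => q1 j - q0 j)); auto. intro j; rewrite Hq1, Hq0; auto. }
    assert (SV : sumR K RV = 0).
    { apply (sbp K dx mV (fun j => V1 j - V0 j)); auto. intro j; rewrite HV1, HV0; auto. }
    apply Rminus_diag_uniq.
    rewrite !energy_sum, <- sumR_minus.
    rewrite (sumR_ext _ _ (fun k => 2 * Rp k + (2 * Rq k + RV k))).
    + rewrite !sumR_plus, !sumR_scal, Sp, Sq, SV. ring.
    + intro k. unfold Rp, Rq, RV. rewrite Hd1, Hd2, Hd3.
      assert (HNk : N1 k = 2 * ((V1 k - V0 k) / dt - (p1 k ^ 2 + q1 k ^ 2 + (p0 k ^ 2 + q0 k ^ 2)) / 2) - N0 k)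
        by (rewrite HV; field; auto).
      rewrite HNk. unfold mp, mq, mV, dX. field. auto.
Qed.

Lemma apriori : forall K dx L (p q N V : Z -> R) Hb mb,
  (1 <= K)%nat -> 0 < dx -> L = INR K * dx -> per K p -> per K q ->
  energy K dx p q N V * dx <= Hb -> mass K p q * dx <= mb ->
  sumR K (fun k => N k ^ 2) * dx <= 4 * (Hb + mb ^ 2 / L + 8 * mb ^ 2 * (mb + 1)) /\
  sumR K (fun k => dX dx V k ^ 2) * dx <= 4 * (Hb + mb ^ 2 / L + 8 * mb ^ 2 * (mb + 1)).
Proof.
  intros K dx L p q N V Hb mb HK Hdx HL Hp Hq HH Hm.
  assert (HKp : 0 < INR K) by (apply lt_0_INR; lia).
  assert (HLp : 0 < L) by (rewrite HL; apply Rmult_lt_0_compat; auto).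
  set (g := fun k => p k ^ 2 + q k ^ 2).
  set (m := mass K p q * dx).
  set (a := sumR K (fun k => dX dx p k ^ 2 + dX dx q k ^ 2) * dx).
  set (b := sumR K (fun k => N k * g k) * dx).
  set (c := sumR K (fun k => N k ^ 2) * dx).
  set (d := sumR K (fun k => dX dx V k ^ 2) * dx).
  set (s2 := sumR K (fun k => g k ^ 2) * dx).
  assert (Hm0 : 0 <= m).
  { unfold m, mass. apply Rmult_le_pos; [|lra]. apply sumR_nonneg. intro; nra. }
  assert (Ha0 : 0 <= a).
  { unfold a. apply Rmult_le_pos; [|lra]. apply sumR_nonneg. intro; nra. }
  assert (Hc0 : 0 <= c).
  { unfold c. apply Rmult_le_pos; [|lra]. apply sumR_nonneg. intro; nra. }
  assert (Hd0 : 0 <= d).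
  { unfold d. apply Rmult_le_pos; [|lra]. apply sumR_nonneg. intro; nra. }
  assert (HE : energy K dx p q N V * dx = a + b + / 2 * c + / 2 * d).
  { unfold energy, a, b, c, d, g. ring. }
  set (eps := / (2 * (m + 1))).
  assert (Heps : 0 < eps) by (unfold eps; apply Rinv_0_lt_compat; lra).
  set (Gm := m / L + eps * a + 4 / eps * m).
  assert (HG : forall k, g k <= Gm).
  { intro k. unfold g, Gm. eapply Rle_trans. apply (sobolev K dx p q eps); auto.
    unfold m, a, mass. right. rewrite HL. field. split; lra. }
  assert (Hs2 : s2 <= Gm * m).
  { unfold s2, m, mass. rewrite <- Rmult_assoc, <- sumR_scal. apply Rmult_le_compat_r; [lra|].
    apply sumR_le. intro k. specialize (HG k). assert (0 <= g k) by (unfold g; nra). cbv beta. change (p k ^ 2 + q k ^ 2) with (g k). nra. }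
  assert (Hb0 : - (c / 4) - s2 <= b).
  { unfold b, c, s2. 
    assert (sumR K (fun k => - (N k ^ 2 / 4) - g k ^ 2) <= sumR K (fun k => N k * g k)).
    { apply sumR_le. intro k. pose proof (pow2_ge_0 (N k / 2 + g k)). nra. }
    rewrite sumR_minus in H. rewrite (sumR_ext _ (fun k => - (N k ^ 2 / 4)) (fun k => (- / 4) * N k ^ 2)) in H by (intro; field).
    rewrite sumR_scal in H. nra. }
  assert (Hem : eps * m <= / 2).
  { unfold eps. apply (Rmult_le_reg_l (2 * (m + 1))). lra.
    replace (2 * (m + 1) * (/ (2 * (m + 1)) * m)) with m by (field; lra). lra. }
  assert (H4 : 4 / eps * m * m = 8 * m ^ 2 * (m + 1)) by (unfold eps; field; lra).
  assert (Hs2' : s2 <= m ^ 2 / L + a / 2 + 8 * m ^ 2 * (m + 1)).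
  { unfold Gm in Hs2. assert (eps * a * m <= a / 2) by nra.
    replace ((m / L + eps * a + 4 / eps * m) * m) with (m * m / L + eps * a * m + 4 / eps * m * m) in Hs2 by (field; split; lra).
    rewrite H4 in Hs2. replace (m ^ 2 / L) with (m * m / L) by (field; lra). lra. }
  assert (Hmono : m ^ 2 / L + 8 * m ^ 2 * (m + 1) <= mb ^ 2 / L + 8 * mb ^ 2 * (mb + 1)).
  { assert (m ^ 2 <= mb ^ 2) by (unfold m in *; nra).
    assert (m ^ 2 * (m + 1) <= mb ^ 2 * (mb + 1)) by (unfold m in *; nra).
    assert (m ^ 2 / L <= mb ^ 2 / L) by (apply Rmult_le_compat_r; [left; apply Rinv_0_lt_compat; lra | lra]).
    lra. }
  fold c d. rewrite HE in HH. split; lra.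
Qed.

Ltac pertac := intro; cbv beta; repeat match goal with H : per _ ?f |- context [?f (?k + Z.of_nat _)%Z] => rewrite (H k) end; reflexivity.

Lemma main_identity : forall K dx dt (x0 y0 x1 y1 a0 b0 a1 b1 N0 N1 n0 n1 V0 V1 v0 v1 tr ti tN : Z -> R),
  dx <> 0 -> dt <> 0 ->
  per K x0 -> per K y0 -> per K x1 -> per K y1 -> per K a0 -> per K b0 -> per K a1 -> per K b1 ->
  per K V0 -> per K V1 -> per K v0 -> per K v1 -> per K tr -> per K ti ->
  (forall k, - (y1 k - y0 k) / dt = - D2 dx (fun j => (x1 j + x0 j) / 2) k
      + (N1 k + N0 k) / 2 * ((x1 k + x0 k) / 2) + (n1 k + n0 k) / 2 * ((a1 k + a0 k) / 2) - tr k) ->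
  (forall k, (x1 k - x0 k) / dt = - D2 dx (fun j => (y1 j + y0 j) / 2) k
      + (N1 k + N0 k) / 2 * ((y1 k + y0 k) / 2) + (n1 k + n0 k) / 2 * ((b1 k + b0 k) / 2) - ti k) ->
  (forall k, (N1 k - N0 k) / dt = D2 dx (fun j => (V1 j + V0 j) / 2) k) ->
  (forall k, (n1 k - n0 k) / dt = D2 dx (fun j => (v1 j + v0 j) / 2) k - tN k) ->
  sumR K (fun k => dX dx x1 k ^ 2 + dX dx y1 k ^ 2) - sumR K (fun k => dX dx x0 k ^ 2 + dX dx y0 k ^ 2)
  + (sumR K (fun k => N1 k * (x1 k ^ 2 + y1 k ^ 2)) + 2 * sumR K (fun k => n1 k * (x1 k * a1 k + y1 k * b1 k)))
  - (sumR K (fun k => N0 k * (x0 k ^ 2 + y0 k ^ 2)) + 2 * sumR K (fun k => n0 k * (x0 k * a0 k + y0 k * b0 k)))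
  = dt * sumR K (fun k =>
      2 * (dX dx tr k * dX dx (fun j => (y1 j + y0 j) / 2) k - dX dx ti k * dX dx (fun j => (x1 j + x0 j) / 2) k)
    + 2 * (tr k * ((N1 k + N0 k) / 2 * ((y1 k + y0 k) / 2) + (n1 k + n0 k) / 2 * ((b1 k + b0 k) / 2))
           - ti k * ((N1 k + N0 k) / 2 * ((x1 k + x0 k) / 2) + (n1 k + n0 k) / 2 * ((a1 k + a0 k) / 2)))
    - dX dx (fun j => (V1 j + V0 j) / 2) k * dX dx (fun j => (x1 j ^ 2 + y1 j ^ 2 + (x0 j ^ 2 + y0 j ^ 2)) / 2) k
    - dX dx (fun j => (v1 j + v0 j) / 2) k * dX dx (fun j => x1 j * a1 j + y1 j * b1 j + (x0 j * a0 j + y0 j * b0 j)) k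
    - tN k * (x1 k * a1 k + y1 k * b1 k + (x0 k * a0 k + y0 k * b0 k))
    + / 2 * (n1 k + n0 k) * ((x1 k + x0 k) * ((a1 k - a0 k) / dt) + (y1 k + y0 k) * ((b1 k - b0 k) / dt))).
Proof.
  intros K dx dt x0 y0 x1 y1 a0 b0 a1 b1 N0 N1 n0 n1 V0 V1 v0 v1 tr ti tN Hdx Hdt
    Px0 Py0 Px1 Py1 Pa0 Pb0 Pa1 Pb1 PV0 PV1 Pv0 Pv1 Ptr Pti E1 E2 EN En.
  set (mux := fun j => (x1 j + x0 j) / 2). set (muy := fun j => (y1 j + y0 j) / 2).
  set (muV := fun j => (V1 j + V0 j) / 2). set (muv := fun j => (v1 j + v0 j) / 2).
  set (gg := fun j => (x1 j ^ 2 + y1 j ^ 2 + (x0 j ^ 2 + y0 j ^ 2)) / 2).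
  set (cc := fun j => x1 j * a1 j + y1 j * b1 j + (x0 j * a0 j + y0 j * b0 j)).
  fold mux in E1. fold muy in E2. fold muV in EN. fold muv in En.
  assert (Pmux : per K mux) by (unfold mux; pertac). assert (Pmuy : per K muy) by (unfold muy; pertac).
  assert (PmuV : per K muV) by (unfold muV; pertac). assert (Pmuv : per K muv) by (unfold muv; pertac).
  assert (Pgg : per K gg) by (unfold gg; pertac). assert (Pcc : per K cc) by (unfold cc; pertac).
  assert (Pdx : per K (fun j => x1 j - x0 j)) by pertac.
  assert (Pdy : per K (fun j => y1 j - y0 j)) by pertac.
  assert (Hd1 : forall k, D2 dx mux k = (y1 k - y0 k) / dt + (N1 k + N0 k) / 2 * ((x1 k + x0 k) / 2) + (n1 k + n0 k) / 2 * ((a1 k + a0 k) / 2) - tr k)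
    by (intro k; specialize (E1 k); lra).
  assert (Hd2 : forall k, D2 dx muy k = - ((x1 k - x0 k) / dt) + (N1 k + N0 k) / 2 * ((y1 k + y0 k) / 2) + (n1 k + n0 k) / 2 * ((b1 k + b0 k) / 2) - ti k)
    by (intro k; specialize (E2 k); lra).
  assert (Hd3 : forall k, D2 dx muV k = (N1 k - N0 k) / dt) by (intro k; rewrite EN; auto).
  assert (Hd4 : forall k, D2 dx muv k = (n1 k - n0 k) / dt + tN k) by (intro k; rewrite En; ring).
  set (Rx := fun k => D2 dx mux k * (x1 k - x0 k) + dX dx mux k * dX dx (fun j => x1 j - x0 j) k).
  set (Ry := fun k => D2 dx muy k * (y1 k - y0 k) + dX dx muy k * dX dx (fun j => y1 j - y0 j) k).
  set (Rtr := fun k => D2 dx muy k * tr k + dX dx muy k * dX dx tr k).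
  set (Rti := fun k => D2 dx mux k * ti k + dX dx mux k * dX dx ti k).
  set (RV := fun k => D2 dx muV k * gg k + dX dx muV k * dX dx gg k).
  set (Rv := fun k => D2 dx muv k * cc k + dX dx muv k * dX dx cc k).
  assert (Sx : sumR K Rx = 0) by (apply (sbp K dx mux (fun j => x1 j - x0 j)); auto).
  assert (Sy : sumR K Ry = 0) by (apply (sbp K dx muy (fun j => y1 j - y0 j)); auto).
  assert (Str : sumR K Rtr = 0) by (apply sbp; auto).
  assert (Sti : sumR K Rti = 0) by (apply sbp; auto).
  assert (SV : sumR K RV = 0) by (apply sbp; auto).
  assert (Sv : sumR K Rv = 0) by (apply sbp; auto).
  match goal with |- _ = dt * sumR K ?P => set (Psi := P) end.
  transitivity (sumR K (fun k => dX dx x1 k ^ 2 + dX dx y1 k ^ 2 - (dX dx x0 k ^ 2 + dX dx y0 k ^ 2)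
     + (N1 k * (x1 k ^ 2 + y1 k ^ 2) + 2 * (n1 k * (x1 k * a1 k + y1 k * b1 k)))
     - (N0 k * (x0 k ^ 2 + y0 k ^ 2) + 2 * (n0 k * (x0 k * a0 k + y0 k * b0 k))))).
  { rewrite !sumR_minus, !sumR_plus, !sumR_scal, !sumR_minus, !sumR_plus. lra. }
  rewrite (sumR_ext _ _ (fun k => dt * Psi k + (2 * Rx k + 2 * Ry k + dt * ((-2) * Rtr k + 2 * Rti k + RV k + Rv k)))).
  { rewrite !sumR_plus, !sumR_scal, !sumR_plus, !sumR_scal, Sx, Sy, Str, Sti, SV, Sv. ring. }
  intro k. unfold Psi, Rx, Ry, Rtr, Rti, RV, Rv. rewrite Hd1, Hd2, Hd3, Hd4.
  unfold mux, muy, muV, muv, gg, cc, dX. field. auto.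
Qed.

Lemma sq_abs : forall a B, Rabs a <= B -> a ^ 2 <= B ^ 2.
Proof. intros. apply abs_b in H. nra. Qed.
Lemma sq2 : forall u v, (u + v) ^ 2 <= 2 * u ^ 2 + 2 * v ^ 2.
Proof. intros. pose proof (pow2_ge_0 (u - v)). nra. Qed.
Lemma sqavg : forall u v, ((u + v) / 2) ^ 2 <= (u ^ 2 + v ^ 2) / 2.
Proof. intros. pose proof (pow2_ge_0 (u - v)). nra. Qed.
Lemma amgm : forall u v, 2 * (u * v) <= u ^ 2 + v ^ 2.
Proof. intros. pose proof (pow2_ge_0 (u - v)). nra. Qed.
Lemma mulB : forall u a B, Rabs a <= B -> u ^ 2 * a ^ 2 <= B ^ 2 * u ^ 2.
Proof. intros. pose proof (sq_abs _ _ H). pose proof (pow2_ge_0 u).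
  rewrite (Rmult_comm (B^2)). apply Rmult_le_compat_l; auto. Qed.
Lemma avgB : forall a b B, Rabs a <= B -> Rabs b <= B -> ((a + b) / 2) ^ 2 <= B ^ 2.
Proof. intros. apply sq_abs. apply abs_b in H; apply abs_b in H0. apply Rabs_le. lra. Qed.
Lemma sq_nn : forall u, 0 <= u ^ 2.
Proof. intros; apply pow2_ge_0. Qed.

Lemma pb1 : forall T T' X1 X0 Y1 Y0,
  2 * (T * ((Y1 + Y0) / 2) - T' * ((X1 + X0) / 2)) <= T ^ 2 + T' ^ 2 + / 2 * (X1 ^ 2 + X0 ^ 2 + Y1 ^ 2 + Y0 ^ 2).
Proof. intros. pose proof (amgm T ((Y1 + Y0) / 2)). pose proof (amgm (-T') ((X1 + X0) / 2)).
  pose proof (sqavg X1 X0). pose proof (sqavg Y1 Y0). nra. Qed.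

Lemma pb2 : forall tr ti N1 N0 n1 n0 x1 x0 y1 y0 a1 a0 b1 b0 S1 S0 B,
  x1 ^ 2 + y1 ^ 2 <= S1 -> x0 ^ 2 + y0 ^ 2 <= S0 ->
  Rabs a1 <= B -> Rabs a0 <= B -> Rabs b1 <= B -> Rabs b0 <= B ->
  2 * (tr * ((N1 + N0) / 2 * ((y1 + y0) / 2) + (n1 + n0) / 2 * ((b1 + b0) / 2))
       - ti * ((N1 + N0) / 2 * ((x1 + x0) / 2) + (n1 + n0) / 2 * ((a1 + a0) / 2)))
  <= tr ^ 2 + ti ^ 2 + (S1 + S0) / 2 * (N1 ^ 2 + N0 ^ 2) + 2 * B ^ 2 * (n1 ^ 2 + n0 ^ 2).
Proof.
  intros tr ti N1 N0 n1 n0 x1 x0 y1 y0 a1 a0 b1 b0 S1 S0 B H1 H0 Ha1 Ha0 Hb1 Hb0.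
  set (mN := (N1 + N0) / 2). set (mn := (n1 + n0) / 2).
  set (mx := (x1 + x0) / 2). set (my := (y1 + y0) / 2).
  set (ma := (a1 + a0) / 2). set (mb := (b1 + b0) / 2).
  set (P := mN * my + mn * mb). set (Q := mN * mx + mn * ma).
  assert (HPQ : 2 * (tr * P - ti * Q) <= tr ^ 2 + ti ^ 2 + P ^ 2 + Q ^ 2).
  { pose proof (amgm tr P). pose proof (amgm (- ti) Q). nra. }
  assert (HP : P ^ 2 <= 2 * (mN ^ 2 * my ^ 2) + 2 * (mn ^ 2 * mb ^ 2)).
  { unfold P. pose proof (sq2 (mN * my) (mn * mb)). nra. }
  assert (HQ : Q ^ 2 <= 2 * (mN ^ 2 * mx ^ 2) + 2 * (mn ^ 2 * ma ^ 2)).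
  { unfold Q. pose proof (sq2 (mN * mx) (mn * ma)). nra. }
  assert (Hxy : mx ^ 2 + my ^ 2 <= (S1 + S0) / 2).
  { unfold mx, my. pose proof (sqavg x1 x0). pose proof (sqavg y1 y0). lra. }
  assert (HN : mN ^ 2 <= (N1 ^ 2 + N0 ^ 2) / 2) by apply sqavg.
  assert (Hn : mn ^ 2 <= (n1 ^ 2 + n0 ^ 2) / 2) by apply sqavg.
  assert (Ha : ma ^ 2 <= B ^ 2) by (apply avgB; auto).
  assert (Hb : mb ^ 2 <= B ^ 2) by (apply avgB; auto).
  assert (T1 : mN ^ 2 * (mx ^ 2 + my ^ 2) <= (N1 ^ 2 + N0 ^ 2) / 2 * ((S1 + S0) / 2)).
  { apply Rmult_le_compat; auto using sq_nn. pose proof (sq_nn mx); pose proof (sq_nn my); lra. }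
  assert (T2 : mn ^ 2 * (ma ^ 2 + mb ^ 2) <= (n1 ^ 2 + n0 ^ 2) / 2 * (2 * B ^ 2)).
  { apply Rmult_le_compat; auto using sq_nn. pose proof (sq_nn ma); pose proof (sq_nn mb); lra. lra. }
  nra.
Qed.

Lemma pb3_aux : forall w X x' x Y y' y S,
  x' ^ 2 + y' ^ 2 <= S -> x ^ 2 + y ^ 2 <= S ->
  Rabs (w * (X * (x' + x) + Y * (y' + y))) <= / 2 * (4 * S * w ^ 2 + X ^ 2 + Y ^ 2).
Proof. intros w X x' x Y y' y S H1 H0.
  assert (Hs : (x' + x) ^ 2 + (y' + y) ^ 2 <= 4 * S).
  { pose proof (sq2 x' x). pose proof (sq2 y' y). lra. }
  assert (Hw : w ^ 2 * ((x' + x) ^ 2 + (y' + y) ^ 2) <= w ^ 2 * (4 * S)).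
  { apply Rmult_le_compat_l; auto using sq_nn. }
  apply Rabs_le. split.
  - pose proof (amgm (w * (x' + x)) (- X)). pose proof (amgm (w * (y' + y)) (- Y)). nra.
  - pose proof (amgm (w * (x' + x)) X). pose proof (amgm (w * (y' + y)) Y). nra.
Qed.

Lemma pb3 : forall W1 W0 X1 X0 Y1 Y0 x1' x1 y1' y1 x0' x0 y0' y0 S1 S0,
  x1' ^ 2 + y1' ^ 2 <= S1 -> x1 ^ 2 + y1 ^ 2 <= S1 ->
  x0' ^ 2 + y0' ^ 2 <= S0 -> x0 ^ 2 + y0 ^ 2 <= S0 ->
  - ((W1 + W0) / 2) * ((X1 * (x1' + x1) + Y1 * (y1' + y1) + (X0 * (x0' + x0) + Y0 * (y0' + y0))) / 2)
  <= (S1 + S0) / 2 * (W1 ^ 2 + W0 ^ 2) + / 4 * (X1 ^ 2 + X0 ^ 2 + Y1 ^ 2 + Y0 ^ 2).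
Proof. intros.
  set (w := (W1 + W0) / 2).
  pose proof (pb3_aux w X1 x1' x1 Y1 y1' y1 S1 H H0).
  pose proof (pb3_aux w X0 x0' x0 Y0 y0' y0 S0 H1 H2).
  apply abs_b in H3. apply abs_b in H4.
  assert (Hw : w ^ 2 <= (W1 ^ 2 + W0 ^ 2) / 2) by apply sqavg.
  assert (S1 + S0 >= 0). { pose proof (sq_nn x1); pose proof (sq_nn y1); pose proof (sq_nn x0); pose proof (sq_nn y0). lra. }
  assert (w ^ 2 * (S1 + S0) <= (W1 ^ 2 + W0 ^ 2) / 2 * (S1 + S0)) by (apply Rmult_le_compat_r; lra).
  nra.
Qed.

Lemma pb4_aux : forall X a' x A Y b' y Bb B,
  Rabs a' <= B -> Rabs A <= B -> Rabs b' <= B -> Rabs Bb <= B ->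
  (X * a' + x * A + (Y * b' + y * Bb)) ^ 2 <= 4 * B ^ 2 * (X ^ 2 + Y ^ 2 + x ^ 2 + y ^ 2).
Proof. intros.
  replace (X * a' + x * A + (Y * b' + y * Bb)) with ((X * a' + Y * b') + (x * A + y * Bb)) by ring.
  pose proof (sq2 (X * a' + Y * b') (x * A + y * Bb)).
  pose proof (sq2 (X * a') (Y * b')). pose proof (sq2 (x * A) (y * Bb)).
  pose proof (mulB X a' B H). pose proof (mulB x A B H0). pose proof (mulB Y b' B H1). pose proof (mulB y Bb B H2).
  assert (E : forall u v, (u * v) ^ 2 = u ^ 2 * v ^ 2) by (intros; ring).
  rewrite !E in *. nra.
Qed.

Lemma pb4 : forall U1 U0 Q1 Q0 R1 R0 B,
  Q1 ^ 2 <= 4 * B ^ 2 * R1 -> Q0 ^ 2 <= 4 * B ^ 2 * R0 ->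
  - ((U1 + U0) / 2) * (Q1 + Q0) <= / 4 * (U1 ^ 2 + U0 ^ 2) + 4 * B ^ 2 * (R1 + R0).
Proof. intros.
  pose proof (amgm (- ((U1 + U0) / 2)) (Q1 + Q0)). pose proof (sqavg U1 U0). pose proof (sq2 Q1 Q0). nra. Qed.

Lemma pb5 : forall tN x1 a1 y1 b1 x0 a0 y0 b0 B,
  Rabs a1 <= B -> Rabs a0 <= B -> Rabs b1 <= B -> Rabs b0 <= B ->
  - tN * (x1 * a1 + y1 * b1 + (x0 * a0 + y0 * b0)) <= / 2 * tN ^ 2 + 2 * B ^ 2 * (x1 ^ 2 + y1 ^ 2 + (x0 ^ 2 + y0 ^ 2)).
Proof. intros.
  pose proof (amgm (- tN) (x1 * a1 + y1 * b1 + (x0 * a0 + y0 * b0))).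
  pose proof (sq2 (x1 * a1 + y1 * b1) (x0 * a0 + y0 * b0)).
  pose proof (sq2 (x1 * a1) (y1 * b1)). pose proof (sq2 (x0 * a0) (y0 * b0)).
  pose proof (mulB x1 a1 B H). pose proof (mulB y1 b1 B H1). pose proof (mulB x0 a0 B H0). pose proof (mulB y0 b0 B H2).
  assert (E : forall u v, (u * v) ^ 2 = u ^ 2 * v ^ 2) by (intros; ring).
  rewrite !E in *. nra.
Qed.

Lemma pb6 : forall n1 n0 x1 x0 y1 y0 ta tb B,
  Rabs ta <= B -> Rabs tb <= B ->
  / 2 * (n1 + n0) * ((x1 + x0) * ta + (y1 + y0) * tb) <= / 2 * (n1 ^ 2 + n0 ^ 2) + B ^ 2 * (x1 ^ 2 + y1 ^ 2 + (x0 ^ 2 + y0 ^ 2)).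
Proof. intros.
  pose proof (amgm (n1 + n0) ((x1 + x0) * ta + (y1 + y0) * tb)).
  pose proof (sq2 n1 n0). pose proof (sq2 ((x1 + x0) * ta) ((y1 + y0) * tb)).
  pose proof (mulB (x1 + x0) ta B H). pose proof (mulB (y1 + y0) tb B H0).
  pose proof (sq2 x1 x0). pose proof (sq2 y1 y0).
  assert (E : forall u v, (u * v) ^ 2 = u ^ 2 * v ^ 2) by (intros; ring).
  rewrite !E in *. pose proof (sq_nn B).
  assert (B ^ 2 * (x1 + x0) ^ 2 <= B ^ 2 * (2 * x1 ^ 2 + 2 * x0 ^ 2)) by (apply Rmult_le_compat_l; auto).
  assert (B ^ 2 * (y1 + y0) ^ 2 <= B ^ 2 * (2 * y1 ^ 2 + 2 * y0 ^ 2)) by (apply Rmult_le_compat_l; auto).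
  nra.
Qed.

Lemma dX_avg : forall dx f g k, dx <> 0 -> dX dx (fun j => (f j + g j) / 2) k = (dX dx f k + dX dx g k) / 2.
Proof. intros. unfold dX. field. auto. Qed.

Lemma sum_nn : forall K f dx, 0 <= dx -> (forall k, 0 <= f k) -> 0 <= sumR K f * dx.
Proof. intros. apply Rmult_le_pos; auto. apply sumR_nonneg; auto. Qed.

Lemma main_est : forall K dx dt L (x0 y0 x1 y1 a0 b0 a1 b1 N0 N1 n0 n1 V0 V1 v0 v1 tr ti tN : Z -> R) tb B BN BV,
  (1 <= K)%nat -> 0 < dx -> 0 < dt -> L = INR K * dx ->
  per K x0 -> per K y0 -> per K x1 -> per K y1 -> per K a0 -> per K b0 -> per K a1 -> per K b1 ->
  per K V0 -> per K V1 -> per K v0 -> per K v1 -> per K tr -> per K ti ->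
  (forall k, - (y1 k - y0 k) / dt = - D2 dx (fun j => (x1 j + x0 j) / 2) k
      + (N1 k + N0 k) / 2 * ((x1 k + x0 k) / 2) + (n1 k + n0 k) / 2 * ((a1 k + a0 k) / 2) - tr k) ->
  (forall k, (x1 k - x0 k) / dt = - D2 dx (fun j => (y1 j + y0 j) / 2) k
      + (N1 k + N0 k) / 2 * ((y1 k + y0 k) / 2) + (n1 k + n0 k) / 2 * ((b1 k + b0 k) / 2) - ti k) ->
  (forall k, (N1 k - N0 k) / dt = D2 dx (fun j => (V1 j + V0 j) / 2) k) ->
  (forall k, (n1 k - n0 k) / dt = D2 dx (fun j => (v1 j + v0 j) / 2) k - tN k) ->
  sumR K (fun k => tr k ^ 2 + ti k ^ 2) * dx <= tb ^ 2 ->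
  sumR K (fun k => dX dx tr k ^ 2 + dX dx ti k ^ 2) * dx <= tb ^ 2 ->
  sumR K (fun k => tN k ^ 2) * dx <= tb ^ 2 ->
  sumR K (fun k => N1 k ^ 2) * dx <= BN -> sumR K (fun k => N0 k ^ 2) * dx <= BN ->
  sumR K (fun k => dX dx V1 k ^ 2) * dx <= BV -> sumR K (fun k => dX dx V0 k ^ 2) * dx <= BV ->
  (forall k, Rabs (a1 k) <= B) -> (forall k, Rabs (a0 k) <= B) ->
  (forall k, Rabs (b1 k) <= B) -> (forall k, Rabs (b0 k) <= B) ->
  (forall k, Rabs (dX dx a1 k) <= B) -> (forall k, Rabs (dX dx a0 k) <= B) ->
  (forall k, Rabs (dX dx b1 k) <= B) -> (forall k, Rabs (dX dx b0 k) <= B) ->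
  (forall k, Rabs ((a1 k - a0 k) / dt) <= B) -> (forall k, Rabs ((b1 k - b0 k) / dt) <= B) ->
  (sumR K (fun k => dX dx x1 k ^ 2 + dX dx y1 k ^ 2) - sumR K (fun k => dX dx x0 k ^ 2 + dX dx y0 k ^ 2)
  + (sumR K (fun k => N1 k * (x1 k ^ 2 + y1 k ^ 2)) + 2 * sumR K (fun k => n1 k * (x1 k * a1 k + y1 k * b1 k)))
  - (sumR K (fun k => N0 k * (x0 k ^ 2 + y0 k ^ 2)) + 2 * sumR K (fun k => n0 k * (x0 k * a0 k + y0 k * b0 k)))) * dx
  <= dt * (((BN + BV) * (/ L + 5) + 1 + 7 * B ^ 2) *
       (sumR K (fun k => x1 k ^ 2 + y1 k ^ 2) * dx + sumR K (fun k => dX dx x1 k ^ 2 + dX dx y1 k ^ 2) * dx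
        + sumR K (fun k => n1 k ^ 2) * dx + sumR K (fun k => dX dx v1 k ^ 2) * dx
        + (sumR K (fun k => x0 k ^ 2 + y0 k ^ 2) * dx + sumR K (fun k => dX dx x0 k ^ 2 + dX dx y0 k ^ 2) * dx
        + sumR K (fun k => n0 k ^ 2) * dx + sumR K (fun k => dX dx v0 k ^ 2) * dx)) + 4 * tb ^ 2).
Proof.
  intros K dx dt L x0 y0 x1 y1 a0 b0 a1 b1 N0 N1 n0 n1 V0 V1 v0 v1 tr ti tN tb B BN BV
    HK Hdx Hdt HL Px0 Py0 Px1 Py1 Pa0 Pb0 Pa1 Pb1 PV0 PV1 Pv0 Pv1 Ptr Pti E1 E2 EN En
    Ht1 Ht2 Ht3 HN1 HN0 HV1 HV0 Ba1 Ba0 Bb1 Bb0 Bda1 Bda0 Bdb1 Bdb0 Bta Btb.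
  rewrite (main_identity K dx dt x0 y0 x1 y1 a0 b0 a1 b1 N0 N1 n0 n1 V0 V1 v0 v1 tr ti tN); auto; try lra.
  match goal with |- dt * sumR K ?P * dx <= _ => set (Psi := P) end.
  set (S1 := sumR K (fun j => x1 j ^ 2 + y1 j ^ 2) / INR K + 1 * (sumR K (fun j => dX dx x1 j ^ 2 + dX dx y1 j ^ 2) * dx)
        + 4 / 1 * (sumR K (fun j => x1 j ^ 2 + y1 j ^ 2) * dx)).
  set (S0 := sumR K (fun j => x0 j ^ 2 + y0 j ^ 2) / INR K + 1 * (sumR K (fun j => dX dx x0 j ^ 2 + dX dx y0 j ^ 2) * dx)
        + 4 / 1 * (sumR K (fun j => x0 j ^ 2 + y0 j ^ 2) * dx)).
  assert (Sob1 : forall k, x1 k ^ 2 + y1 k ^ 2 <= S1) by (apply sobolev; auto; lra).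
  assert (Sob0 : forall k, x0 k ^ 2 + y0 k ^ 2 <= S0) by (apply sobolev; auto; lra).
  set (cS := (S1 + S0) / 2). set (c1 := 3 / 4 + 4 * B ^ 2). set (c2 := 7 * B ^ 2). set (c3 := 2 * B ^ 2 + / 2).
  assert (Hpt : forall k, Psi k <=
      1 * (dX dx tr k ^ 2 + dX dx ti k ^ 2) + 1 * (tr k ^ 2 + ti k ^ 2) + / 2 * tN k ^ 2
      + cS * N1 k ^ 2 + cS * N0 k ^ 2 + cS * dX dx V1 k ^ 2 + cS * dX dx V0 k ^ 2
      + c1 * (dX dx x1 k ^ 2 + dX dx y1 k ^ 2) + c1 * (dX dx x0 k ^ 2 + dX dx y0 k ^ 2)
      + c2 * (x1 k ^ 2 + y1 k ^ 2) + c2 * (x0 k ^ 2 + y0 k ^ 2)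
      + c3 * n1 k ^ 2 + c3 * n0 k ^ 2 + / 4 * dX dx v1 k ^ 2 + / 4 * dX dx v0 k ^ 2).
  { intro k. unfold Psi.
    replace (dX dx (fun j => (x1 j ^ 2 + y1 j ^ 2 + (x0 j ^ 2 + y0 j ^ 2)) / 2) k) with
      ((dX dx x1 k * (x1 (k + 1)%Z + x1 k) + dX dx y1 k * (y1 (k + 1)%Z + y1 k)
        + (dX dx x0 k * (x0 (k + 1)%Z + x0 k) + dX dx y0 k * (y0 (k + 1)%Z + y0 k))) / 2)
      by (unfold dX; field; lra).
    replace (dX dx (fun j => x1 j * a1 j + y1 j * b1 j + (x0 j * a0 j + y0 j * b0 j)) k) with
      ((dX dx x1 k * a1 (k + 1)%Z + x1 k * dX dx a1 k + (dX dx y1 k * b1 (k + 1)%Z + y1 k * dX dx b1 k))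
       + (dX dx x0 k * a0 (k + 1)%Z + x0 k * dX dx a0 k + (dX dx y0 k * b0 (k + 1)%Z + y0 k * dX dx b0 k)))
      by (unfold dX; field; lra).
    rewrite !dX_avg by lra.
    pose proof (pb1 (dX dx tr k) (dX dx ti k) (dX dx x1 k) (dX dx x0 k) (dX dx y1 k) (dX dx y0 k)) as P1.
    pose proof (pb2 (tr k) (ti k) (N1 k) (N0 k) (n1 k) (n0 k) (x1 k) (x0 k) (y1 k) (y0 k) (a1 k) (a0 k) (b1 k) (b0 k) S1 S0 B
      (Sob1 k) (Sob0 k) (Ba1 k) (Ba0 k) (Bb1 k) (Bb0 k)) as P2.
    pose proof (pb3 (dX dx V1 k) (dX dx V0 k) (dX dx x1 k) (dX dx x0 k) (dX dx y1 k) (dX dx y0 k)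
      (x1 (k+1)%Z) (x1 k) (y1 (k+1)%Z) (y1 k) (x0 (k+1)%Z) (x0 k) (y0 (k+1)%Z) (y0 k) S1 S0
      (Sob1 _) (Sob1 _) (Sob0 _) (Sob0 _)) as P3.
    pose proof (pb4_aux (dX dx x1 k) (a1 (k+1)%Z) (x1 k) (dX dx a1 k) (dX dx y1 k) (b1 (k+1)%Z) (y1 k) (dX dx b1 k) B
      (Ba1 _) (Bda1 k) (Bb1 _) (Bdb1 k)) as Q1.
    pose proof (pb4_aux (dX dx x0 k) (a0 (k+1)%Z) (x0 k) (dX dx a0 k) (dX dx y0 k) (b0 (k+1)%Z) (y0 k) (dX dx b0 k) B
      (Ba0 _) (Bda0 k) (Bb0 _) (Bdb0 k)) as Q0.
    pose proof (pb4 (dX dx v1 k) (dX dx v0 k) _ _ _ _ B Q1 Q0) as P4.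
    pose proof (pb5 (tN k) (x1 k) (a1 k) (y1 k) (b1 k) (x0 k) (a0 k) (y0 k) (b0 k) B (Ba1 k) (Ba0 k) (Bb1 k) (Bb0 k)) as P5.
    pose proof (pb6 (n1 k) (n0 k) (x1 k) (x0 k) (y1 k) (y0 k) _ _ B (Bta k) (Btb k)) as P6.
    unfold cS, c1, c2, c3. lra. }
  set (m1 := sumR K (fun k => x1 k ^ 2 + y1 k ^ 2) * dx). set (m0 := sumR K (fun k => x0 k ^ 2 + y0 k ^ 2) * dx).
  set (G1 := sumR K (fun k => dX dx x1 k ^ 2 + dX dx y1 k ^ 2) * dx). set (G0 := sumR K (fun k => dX dx x0 k ^ 2 + dX dx y0 k ^ 2) * dx).
  set (nn1 := sumR K (fun k => n1 k ^ 2) * dx). set (nn0 := sumR K (fun k => n0 k ^ 2) * dx).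
  set (vv1 := sumR K (fun k => dX dx v1 k ^ 2) * dx). set (vv0 := sumR K (fun k => dX dx v0 k ^ 2) * dx).
  assert (Hm1 : 0 <= m1) by (apply sum_nn; [lra | intro; pose proof (sq_nn (x1 k)); pose proof (sq_nn (y1 k)); lra]).
  assert (Hm0 : 0 <= m0) by (apply sum_nn; [lra | intro; pose proof (sq_nn (x0 k)); pose proof (sq_nn (y0 k)); lra]).
  assert (HG1 : 0 <= G1) by (apply sum_nn; [lra | intro; pose proof (sq_nn (dX dx x1 k)); pose proof (sq_nn (dX dx y1 k)); lra]).
  assert (HG0 : 0 <= G0) by (apply sum_nn; [lra | intro; pose proof (sq_nn (dX dx x0 k)); pose proof (sq_nn (dX dx y0 k)); lra]).
  assert (Hn1 : 0 <= nn1) by (apply sum_nn; [lra | intro; apply sq_nn]).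
  assert (Hn0 : 0 <= nn0) by (apply sum_nn; [lra | intro; apply sq_nn]).
  assert (Hv1 : 0 <= vv1) by (apply sum_nn; [lra | intro; apply sq_nn]).
  assert (Hv0 : 0 <= vv0) by (apply sum_nn; [lra | intro; apply sq_nn]).
  assert (HKp : 0 < INR K) by (apply lt_0_INR; lia).
  assert (HLp : 0 < L) by (rewrite HL; apply Rmult_lt_0_compat; auto).
  assert (HiL : 0 < / L) by (apply Rinv_0_lt_compat; auto).
  assert (ES1 : S1 = m1 * / L + G1 + 4 * m1) by (unfold S1, m1, G1; rewrite HL; field; lra).
  assert (ES0 : S0 = m0 * / L + G0 + 4 * m0) by (unfold S0, m0, G0; rewrite HL; field; lra).
  assert (HBN : 0 <= BN) by (eapply Rle_trans; [|apply HN1]; apply sum_nn; [lra | intro; apply sq_nn]).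
  assert (HBV : 0 <= BV) by (eapply Rle_trans; [|apply HV1]; apply sum_nn; [lra | intro; apply sq_nn]).
  assert (HcS : 0 <= cS) by (unfold cS; rewrite ES1, ES0; pose proof (Rmult_le_pos _ _ Hm1 (Rlt_le _ _ HiL)); pose proof (Rmult_le_pos _ _ Hm0 (Rlt_le _ _ HiL)); lra).
  assert (HS : sumR K Psi * dx <= ((BN + BV) * (/ L + 5) + 1 + 7 * B ^ 2) *
       (m1 + G1 + nn1 + vv1 + (m0 + G0 + nn0 + vv0)) + 4 * tb ^ 2).
  { eapply Rle_trans. apply Rmult_le_compat_r. lra. apply sumR_le. exact Hpt.
    rewrite !sumR_plus, !sumR_scal.
    set (T1 := sumR K (fun k => dX dx tr k ^ 2 + dX dx ti k ^ 2)) in *.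
    set (T2 := sumR K (fun k => tr k ^ 2 + ti k ^ 2)) in *.
    set (T3 := sumR K (fun k => tN k ^ 2)) in *.
    set (sN1 := sumR K (fun k => N1 k ^ 2)) in *. set (sN0 := sumR K (fun k => N0 k ^ 2)) in *.
    set (sV1 := sumR K (fun k => dX dx V1 k ^ 2)) in *. set (sV0 := sumR K (fun k => dX dx V0 k ^ 2)) in *.
    assert (F1 : cS * (sN1 * dx) <= cS * BN) by (apply Rmult_le_compat_l; auto).
    assert (F2 : cS * (sN0 * dx) <= cS * BN) by (apply Rmult_le_compat_l; auto).
    assert (F3 : cS * (sV1 * dx) <= cS * BV) by (apply Rmult_le_compat_l; auto).
    assert (F4 : cS * (sV0 * dx) <= cS * BV) by (apply Rmult_le_compat_l; auto).
    assert (F5 : (S1 + S0) <= (/ L + 5) * (m1 + G1 + nn1 + vv1 + (m0 + G0 + nn0 + vv0))).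
    { rewrite ES1, ES0.
      pose proof (Rmult_le_pos _ _ (Rlt_le _ _ HiL) HG1). pose proof (Rmult_le_pos _ _ (Rlt_le _ _ HiL) HG0).
      pose proof (Rmult_le_pos _ _ (Rlt_le _ _ HiL) Hn1). pose proof (Rmult_le_pos _ _ (Rlt_le _ _ HiL) Hn0).
      pose proof (Rmult_le_pos _ _ (Rlt_le _ _ HiL) Hv1). pose proof (Rmult_le_pos _ _ (Rlt_le _ _ HiL) Hv0).
      lra. }
    assert (F6 : (S1 + S0) * (BN + BV) <= (/ L + 5) * (m1 + G1 + nn1 + vv1 + (m0 + G0 + nn0 + vv0)) * (BN + BV))
      by (apply Rmult_le_compat_r; lra).
    pose proof (sq_nn B) as HB2.
    pose proof (Rmult_le_pos _ _ HB2 HG1). pose proof (Rmult_le_pos _ _ HB2 HG0).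
    pose proof (Rmult_le_pos _ _ HB2 Hn1). pose proof (Rmult_le_pos _ _ HB2 Hn0).
    pose proof (Rmult_le_pos _ _ HB2 Hv1). pose proof (Rmult_le_pos _ _ HB2 Hv0).
    pose proof (Rmult_le_pos _ _ HB2 Hm1). pose proof (Rmult_le_pos _ _ HB2 Hm0).
    pose proof (sq_nn tb).
    unfold cS, c1, c2, c3 in *. unfold m1, m0, G1, G0, nn1, nn0, vv1, vv0 in *.
    lra. }
  replace (dt * sumR K Psi * dx) with (dt * (sumR K Psi * dx)) by ring.
  apply Rmult_le_compat_l. lra. unfold c2. lra.
Qed.

Lemma local_bound : forall (g : R -> R -> R) u v,
  continuous (fun p : R * R => g (fst p) (snd p)) (u, v) ->
  exists d : posreal, forall t x, Rabs (t - u) < d -> Rabs (x - v) < d -> Rabs (g t x - g u v) < 1.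
Proof.
  intros g u v Hc.
  assert (H1 : locally (g u v) (fun y => ball (g u v) (mkposreal 1 Rlt_0_1) y)) by apply locally_ball.
  specialize (Hc _ H1). destruct Hc as [d Hd]. exists d. intros t x Ht Hx.
  specialize (Hd (t, x)). 
  assert (B : ball (u, v) d (t, x)).
  { split; simpl; change (Rabs (t - u) < d) || change (Rabs (x - v) < d); auto. }
  specialize (Hd B). simpl in Hd. change (Rabs (g t x - g u v) < 1) in Hd. auto.
Qed.

Fixpoint lmax (g : R -> R -> R) (l : list (Compactness.Tn 2 R)) : R :=
  match l with
  | nil => 0
  | cons (u, (v, _)) l' => Rmax (Rabs (g u v) + 1) (lmax g l')
  end.

Lemma lmax_in : forall g l u v w, In (u, (v, w)) l -> Rabs (g u v) + 1 <= lmax g l.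
Proof. intros g l. induction l as [|[u' [v' w']] l IH]; intros u v w Hin; simpl in *. contradiction.
  destruct Hin as [He | Hin].
  - inversion He; subst. apply Rmax_l.
  - eapply Rle_trans. apply (IH u v w Hin). apply Rmax_r. Qed.

Lemma lmax_nn : forall g l, 0 <= lmax g l.
Proof. intros g l. induction l as [|[u' [v' w']] l IH]; simpl. lra. eapply Rle_trans. apply IH. apply Rmax_r. Qed.

Lemma cont_bound : forall (g : R -> R -> R) a b t0 t1 x0 x1,
  a < t0 -> t1 < b ->
  (forall t x, a < t < b -> continuous (fun p : R * R => g (fst p) (snd p)) (t, x)) ->
  exists M, 0 <= M /\ forall t x, t0 <= t <= t1 -> x0 <= x <= x1 -> Rabs (g t x) <= M.
Proof.
  intros g a b t0 t1 x0 x1 Ha Hb Hc.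
  assert (Hd : forall p : Compactness.Tn 2 R, exists d : posreal,
     a < fst p < b -> forall t x, Rabs (t - fst p) < d -> Rabs (x - fst (snd p)) < d -> Rabs (g t x - g (fst p) (fst (snd p))) < 1).
  { intros [u [v w]]. simpl. destruct (classic (a < u < b)) as [Hu | Hu].
    - destruct (local_bound g u v (Hc u v Hu)) as [d Hd]. exists d. intros _. auto.
    - exists (mkposreal 1 Rlt_0_1). intro; contradiction. }
  set (delta := fun p => proj1_sig (constructive_indefinite_description _ (Hd p))).
  assert (Hdelta : forall p, a < fst p < b -> forall t x, Rabs (t - fst p) < delta p -> Rabs (x - fst (snd p)) < delta p -> Rabs (g t x - g (fst p) (fst (snd p))) < 1).
  { intro p. unfold delta. destruct (constructive_indefinite_description _ (Hd p)) as [d Hdp]. simpl. auto. }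
  pose proof (compactness_list 2 (t0, (x0, tt)) (t1, (x1, tt)) delta) as Hl.
  apply NNPP. intro Hn. apply Hl. intros [l Hlist]. apply Hn.
  exists (lmax g l). split. apply lmax_nn.
  intros t x Ht Hx.
  destruct (Hlist (t, (x, tt))) as [[u [v w]] [Hin [Hbd Hcl]]].
  { simpl. auto. }
  simpl in Hbd, Hcl. destruct Hbd as [Hu [Hv _]]. destruct Hcl as [Hct [Hcx _]].
  assert (Hg := Hdelta (u, (v, w))). simpl in Hg.
  specialize (Hg ltac:(lra) t x Hct Hcx).
  pose proof (lmax_in g l u v w Hin).
  pose proof (Rabs_triang_inv (g t x) (g u v)). lra.
Qed.

Lemma mvt_bound : forall (f df : R -> R) u w Bd, u < w ->
  (forall y, u <= y <= w -> is_derive f y (df y)) ->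
  (forall y, u <= y <= w -> Rabs (df y) <= Bd) ->
  Rabs ((f w - f u) / (w - u)) <= Bd.
Proof.
  intros f df u w Bd Huw Hd Hb.
  destruct (MVT_gen f u w df) as [c [Hc Heq]].
  - intros y Hy. rewrite Rmin_left, Rmax_right in Hy by lra. apply Hd; lra.
  - intros y Hy. rewrite Rmin_left, Rmax_right in Hy by lra.
    apply continuity_pt_filterlim. refine (ex_derive_continuous (K:=R_AbsRing) (V:=R_NormedModule) f y _). exists (df y). apply Hd; lra.
  - rewrite Rmin_left, Rmax_right in Hc by lra.
    rewrite Heq. replace (df c * (w - u) / (w - u)) with (df c) by (field; lra). apply Hb; lra.
Qed.

Lemma smooth_bounds : forall a b f T X, smooth_strip a b f -> a < 0 -> T < b -> 0 <= T ->
  exists B, 0 <= B /\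
   (forall t x, 0 <= t <= T -> 0 <= x <= X -> Rabs (f t x) <= B) /\
   (forall t x h, 0 <= t <= T -> 0 <= x -> 0 < h -> x + h <= X -> Rabs ((f t (x + h) - f t x) / h) <= B) /\
   (forall t s x, 0 <= t -> t < s -> s <= T -> 0 <= x <= X -> Rabs ((f s x - f t x) / (s - t)) <= B).
Proof.
  intros a b f T X [D [HD0 HD]] Ha Hb HT.
  destruct (cont_bound (D 0%nat 0%nat) a b 0 T 0 X Ha Hb) as [B0 [HB0 H0]].
  { intros t x Ht. apply (proj2 (proj2 (HD 0%nat 0%nat t x Ht))). }
  destruct (cont_bound (D 0%nat 1%nat) a b 0 T 0 X Ha Hb) as [B1 [HB1 H1]].
  { intros t x Ht. apply (proj2 (proj2 (HD 0%nat 1%nat t x Ht))). }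
  destruct (cont_bound (D 1%nat 0%nat) a b 0 T 0 X Ha Hb) as [B2 [HB2 H2]].
  { intros t x Ht. apply (proj2 (proj2 (HD 1%nat 0%nat t x Ht))). }
  exists (B0 + B1 + B2). split; [lra|]. rewrite <- HD0. split; [|split].
  - intros t x Ht Hx. specialize (H0 t x Ht Hx). lra.
  - intros t x h Ht Hx Hh Hxh.
    replace ((D 0%nat 0%nat t (x + h) - D 0%nat 0%nat t x) / h) with ((D 0%nat 0%nat t (x + h) - D 0%nat 0%nat t x) / (x + h - x)) by (f_equal; ring).
    apply (mvt_bound (fun y => D 0%nat 0%nat t y) (fun y => D 0%nat 1%nat t y)); [lra| |].
    + intros y Hy. apply (proj1 (proj2 (HD 0%nat 0%nat t y ltac:(lra)))).
    + intros y Hy. specialize (H1 t y Ht ltac:(lra)). lra.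
  - intros t s x Ht Hts Hs Hx.
    apply (mvt_bound (fun y => D 0%nat 0%nat y x) (fun y => D 1%nat 0%nat y x)); [lra| |].
    + intros y Hy. apply (proj1 (HD 0%nat 0%nat y x ltac:(lra))).
    + intros y Hy. specialize (H2 y x ltac:(lra) Hx). lra.
Qed.

Lemma fst_divR : forall (z : C) r, r <> 0 -> fst (z / RtoC r)%C = fst z / r.
Proof. intros [a b] r H. unfold Cdiv, Cinv, Cmult, RtoC. simpl. field. auto. Qed.
Lemma snd_divR : forall (z : C) r, r <> 0 -> snd (z / RtoC r)%C = snd z / r.
Proof. intros [a b] r H. unfold Cdiv, Cinv, Cmult, RtoC. simpl. field. auto. Qed.

Lemma fst_sumC : forall K f, fst (sumC K f) = sumR K (fun k => fst (f k)).
Proof. induction K; intros; simpl sumC; simpl sumR. reflexivity. simpl. rewrite IHK. auto. Qed.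


Lemma ReipC : forall K dx v w, Re (ipC K dx v w) = sumR K (fun k => fst (v k) * fst (w k) + snd (v k) * snd (w k)) * dx.
Proof. intros. unfold ipC, Re. cbn [fst snd Cmult RtoC]. rewrite fst_sumC.
  replace (snd (sumC K (fun k => (v k * Cconj (w k))%C)) * 0) with 0 by ring.
  rewrite Rminus_0_r. f_equal. apply sumR_ext. intro k. destruct (v k), (w k). simpl. unfold Rdiv; ring. Qed.

Lemma normC_sq : forall K dx v, 0 <= dx -> normC K dx v ^ 2 = sumR K (fun k => fst (v k) ^ 2 + snd (v k) ^ 2) * dx.
Proof. intros. unfold normC. rewrite ReipC. rewrite pow2_sqrt.
  - f_equal. apply sumR_ext. intro; ring.
  - apply Rmult_le_pos; auto. apply sumR_nonneg. intro; nra. Qed.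

Lemma normR_sq : forall K dx v, 0 <= dx -> normR K dx v ^ 2 = sumR K (fun k => v k ^ 2) * dx.
Proof. intros. unfold normR, ipR. rewrite pow2_sqrt.
  - f_equal. apply sumR_ext. intro; ring.
  - apply Rmult_le_pos; auto. apply sumR_nonneg. intro; nra. Qed.

Lemma Cmod_sq : forall z : C, Cmod z ^ 2 = fst z ^ 2 + snd z ^ 2.
Proof. intros. unfold Cmod. rewrite pow2_sqrt. auto. nra. Qed.



Lemma fst_dxpC : forall dx u k, dx <> 0 -> fst (dxpC dx u k) = dX dx (fun j => fst (u j)) k.
Proof. intros. unfold dxpC, dX. rewrite fst_divR by auto. simpl. unfold Rdiv; ring. Qed.
Lemma snd_dxpC : forall dx u k, dx <> 0 -> snd (dxpC dx u k) = dX dx (fun j => snd (u j)) k.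
Proof. intros. unfold dxpC, dX. rewrite snd_divR by auto. simpl. unfold Rdiv; ring. Qed.

Lemma fst_dtpC : forall dt u m k, dt <> 0 -> fst (dtpC dt u m k) = (fst (u (S m) k) - fst (u m k)) / dt.
Proof. intros. unfold dtpC. rewrite fst_divR by auto. simpl. unfold Rdiv; ring. Qed.
Lemma snd_dtpC : forall dt u m k, dt <> 0 -> snd (dtpC dt u m k) = (snd (u (S m) k) - snd (u m k)) / dt.
Proof. intros. unfold dtpC. rewrite snd_divR by auto. simpl. unfold Rdiv; ring. Qed.
Lemma fst_mutC : forall u m k, fst (mutC u m k) = (fst (u (S m) k) + fst (u m k)) / 2.
Proof. intros. unfold mutC. rewrite fst_divR by lra. simpl. unfold Rdiv; ring. Qed.
Lemma snd_mutC : forall u m k, snd (mutC u m k) = (snd (u (S m) k) + snd (u m k)) / 2.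
Proof. intros. unfold mutC. rewrite snd_divR by lra. simpl. unfold Rdiv; ring. Qed.
Lemma fst_dx2C : forall dx w k, dx <> 0 -> fst (dx2C dx w k) = D2 dx (fun j => fst (w j)) k.
Proof. intros. unfold dx2C, D2. rewrite fst_divR by (apply pow_nonzero; auto). simpl. unfold Rdiv; ring. Qed.
Lemma snd_dx2C : forall dx w k, dx <> 0 -> snd (dx2C dx w k) = D2 dx (fun j => snd (w j)) k.
Proof. intros. unfold dx2C, D2. rewrite snd_divR by (apply pow_nonzero; auto). simpl. unfold Rdiv; ring. Qed.

Lemma scheme_real : forall M dt dx Es Ns Vs, dt <> 0 -> dx <> 0 -> dvdm_scheme M dt dx Es Ns Vs ->
  forall j k, (j < M)%nat ->
  - (snd (Es (S j) k) - snd (Es j k)) / dt = - D2 dx (fun i => (fst (Es (S j) i) + fst (Es j i)) / 2) k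
      + (Ns (S j) k + Ns j k) / 2 * ((fst (Es (S j) k) + fst (Es j k)) / 2) /\
  (fst (Es (S j) k) - fst (Es j k)) / dt = - D2 dx (fun i => (snd (Es (S j) i) + snd (Es j i)) / 2) k
      + (Ns (S j) k + Ns j k) / 2 * ((snd (Es (S j) k) + snd (Es j k)) / 2) /\
  (Ns (S j) k - Ns j k) / dt = D2 dx (fun i => (Vs (S j) i + Vs j i) / 2) k /\
  (Vs (S j) k - Vs j k) / dt = (Ns (S j) k + Ns j k) / 2
      + (fst (Es (S j) k) ^ 2 + snd (Es (S j) k) ^ 2 + (fst (Es j k) ^ 2 + snd (Es j k) ^ 2)) / 2.
Proof.
  intros M dt dx Es Ns Vs Hdt Hdx H j k Hj.
  destruct (H j k Hj) as [H1 [H2 H3]].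
  split; [|split; [|split]].
  - apply (f_equal fst) in H1. cbn [fst snd Cmult Cplus Copp Ci RtoC] in H1.
    rewrite snd_dtpC, fst_dx2C, fst_mutC in H1 by auto. unfold D2 in *. cbv beta in *.
    rewrite !fst_mutC in H1. unfold mutR in H1. lra.
  - apply (f_equal snd) in H1. cbn [fst snd Cmult Cplus Copp Ci RtoC] in H1.
    rewrite fst_dtpC, snd_dx2C, snd_mutC in H1 by auto. unfold D2 in *. cbv beta in *.
    rewrite !snd_mutC in H1. unfold mutR in H1. lra.
  - exact H2.
  - unfold dtpR, mutR, abs2 in H3. rewrite !Cmod_sq in H3. exact H3.
Qed.

Lemma tauE_fst : forall dt dx E N m k, dt <> 0 -> dx <> 0 ->
  fst (tauE dt dx E N m k) =
   - (snd (exactC dt dx E (S m) k) - snd (exactC dt dx E m k)) / dt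
   + D2 dx (fun i => (fst (exactC dt dx E (S m) i) + fst (exactC dt dx E m i)) / 2) k
   - (exactR dt dx N (S m) k + exactR dt dx N m k) / 2 * ((fst (exactC dt dx E (S m) k) + fst (exactC dt dx E m k)) / 2).
Proof. intros. unfold tauE. cbn [fst snd Cmult Cplus Copp Ci RtoC Cminus].
  rewrite snd_dtpC, fst_dx2C, fst_mutC by auto. unfold D2. cbv beta. rewrite !fst_mutC. unfold mutR. lra. Qed.

Lemma tauE_snd : forall dt dx E N m k, dt <> 0 -> dx <> 0 ->
  snd (tauE dt dx E N m k) =
   (fst (exactC dt dx E (S m) k) - fst (exactC dt dx E m k)) / dt
   + D2 dx (fun i => (snd (exactC dt dx E (S m) i) + snd (exactC dt dx E m i)) / 2) k
   - (exactR dt dx N (S m) k + exactR dt dx N m k) / 2 * ((snd (exactC dt dx E (S m) k) + snd (exactC dt dx E m k)) / 2).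
Proof. intros. unfold tauE. cbn [fst snd Cmult Cplus Copp Ci RtoC Cminus].
  rewrite fst_dtpC, snd_dx2C, snd_mutC by auto. unfold D2. cbv beta. rewrite !snd_mutC. unfold mutR. lra. Qed.

Lemma Aterm_real : forall K dt dx E N Es Ns m,
  Aterm K dt dx E N Es Ns m =
  sumR K (fun k => Ns m k * (fst (errC Es (exactC dt dx E) m k) ^ 2 + snd (errC Es (exactC dt dx E) m k) ^ 2)) * dx
  + 2 * (sumR K (fun k => errR Ns (exactR dt dx N) m k *
      (fst (errC Es (exactC dt dx E) m k) * fst (exactC dt dx E m k)
       + snd (errC Es (exactC dt dx E) m k) * snd (exactC dt dx E m k))) * dx).
Proof. intros. unfold Aterm, ipR. rewrite ReipC. f_equal.
  - f_equal. apply sumR_ext. intro k. unfold abs2. rewrite Cmod_sq. unfold errR. ring.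
  - f_equal. f_equal. apply sumR_ext. intro k. cbn [fst snd Cmult RtoC]. ring.
Qed.

Lemma IZR_nat : forall i : nat, IZR (Z.of_nat i) = INR i.
Proof. intros. rewrite INR_IZR_INZ. auto. Qed.

Lemma grid_bounds : forall (f : R -> R -> R) Bf K dx L t,
  (forall x, 0 <= x <= 2 * L -> Rabs (f t x) <= Bf) ->
  (forall x h, 0 <= x -> 0 < h -> x + h <= 2 * L -> Rabs ((f t (x + h) - f t x) / h) <= Bf) ->
  (1 <= K)%nat -> 0 < dx -> L = INR K * dx -> per K (fun k => f t (IZR k * dx)) ->
  (forall k, Rabs (f t (IZR k * dx)) <= Bf) /\ (forall k, Rabs (dX dx (fun i => f t (IZR i * dx)) k) <= Bf).
Proof.
  intros f Bf K dx L t H0 H1 HK Hdx HL Hp.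
  assert (HK1 : 1 <= INR K) by (apply (le_INR 1); lia).
  split.
  - apply (per_all K (fun k => f t (IZR k * dx)) (fun y => Rabs y <= Bf)); auto.
    intros i Hi. rewrite IZR_nat. apply H0. assert (INR i <= INR K) by (apply le_INR; lia).
    split. apply Rmult_le_pos; [apply pos_INR | lra]. nra.
  - apply (per_all K (dX dx (fun i => f t (IZR i * dx))) (fun y => Rabs y <= Bf)); auto.
    + intro k. unfold dX. rewrite (per_p1 _ _ Hp). rewrite Hp. auto.
    + intros i Hi. unfold dX. rewrite plus_IZR, IZR_nat.
      replace ((INR i + 1) * dx) with (INR i * dx + dx) by ring.
      apply H1. apply Rmult_le_pos; [apply pos_INR | lra]. auto.
      assert (INR i <= INR K) by (apply le_INR; lia). nra.
Qed.

Lemma grid_tbound : forall (f : R -> R -> R) Bf K dx L t s,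
  (forall x, 0 <= x <= 2 * L -> Rabs ((f s x - f t x) / (s - t)) <= Bf) ->
  (1 <= K)%nat -> 0 < dx -> L = INR K * dx -> per K (fun k => (f s (IZR k * dx) - f t (IZR k * dx)) / (s - t)) ->
  forall k, Rabs ((f s (IZR k * dx) - f t (IZR k * dx)) / (s - t)) <= Bf.
Proof.
  intros f Bf K dx L t s H HK Hdx HL Hp.
  assert (HK1 : 1 <= INR K) by (apply (le_INR 1); lia).
  apply (per_all K (fun k => (f s (IZR k * dx) - f t (IZR k * dx)) / (s - t)) (fun y => Rabs y <= Bf)); auto.
  intros i Hi. rewrite IZR_nat. apply H. assert (INR i <= INR K) by (apply le_INR; lia).
  split. apply Rmult_le_pos; [apply pos_INR | lra]. nra.
Qed.

Lemma final_alg : forall dt G1 G0 A1 A0 Rr R1 R2, 0 < dt -> G1 - G0 + A1 - A0 <= dt * Rr -> Rr = R1 + R2 ->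
  (G1 - G0) / dt <= - ((A1 - A0) / dt) + R1 + R2.
Proof. intros. rewrite Rplus_assoc, <- H1. apply (Rmult_le_reg_l dt); auto.
  replace (dt * ((G1 - G0) / dt)) with (G1 - G0) by (field; lra).
  replace (dt * (- ((A1 - A0) / dt) + Rr)) with (- (A1 - A0) + dt * Rr) by (field; lra). lra. Qed.

Lemma R_eq : forall C3 W c0 dt dx, C3 * W + 4 * (c0 * (dt ^ 2 + dx ^ 2)) ^ 2 = C3 * W + 4 * c0 ^ 2 * (dx ^ 2 + dt ^ 2) ^ 2.
Proof. intros. ring. Qed.

Theorem lemma3p7 :
  forall (L T : R) (E : R -> R -> C) (N V : R -> R -> R) (CV c0 : R),
    0 < L -> 0 < T -> 0 <= CV -> 0 < c0 ->
    zakharov_solution L T E N V ->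
    exists C3 h0 : R, 0 < C3 /\ 0 < h0 /\
      forall (K M : nat) (Es : nat -> Z -> C) (Ns Vs : nat -> Z -> R),
        (1 <= K)%nat -> (1 <= M)%nat ->
        let dx := L / INR K in
        let dt := T / INR M in
        dx < h0 -> dt < h0 ->
        (forall m, periodicC K (Es m) /\ periodicR K (Ns m) /\ periodicR K (Vs m)) ->
        dvdm_scheme M dt dx Es Ns Vs ->
        (forall k, Es 0%nat k = E 0 (IZR k * dx)) ->
        (forall k, Ns 0%nat k = N 0 (IZR k * dx)) ->
        (forall k, Rabs (Vs 0%nat k - V 0 (IZR k * dx)) <= CV * dx ^ 2) ->
        (forall m, (m < M)%nat ->
           normC K dx (tauE dt dx E N m) <= c0 * (dt ^ 2 + dx ^ 2) /\
           normC K dx (dxpC dx (tauE dt dx E N m)) <= c0 * (dt ^ 2 + dx ^ 2) /\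
           normR K dx (tauN dt dx N V m) <= c0 * (dt ^ 2 + dx ^ 2) /\
           normR K dx (dxpR dx (tauV dt dx E N V m)) <= c0 * (dt ^ 2 + dx ^ 2)) ->
        forall m, (m < M)%nat ->
          dtps dt (fun j => (normC K dx (dxpC dx (errC Es (exactC dt dx E) j))) ^ 2) m
          <= - dtps dt (Aterm K dt dx E N Es Ns) m
             + C3 * (err_energy K dt dx E N V Es Ns Vs (S m)
                     + err_energy K dt dx E N V Es Ns Vs m)
             + 4 * c0 ^ 2 * (dx ^ 2 + dt ^ 2) ^ 2.
Proof.
  intros L T E N V CV c0 HL HT HCV Hc0 Hsol.
  destruct Hsol as [[eps [Heps [SEr [SEi [SN SV]]]]] [Hper [_ [_ _]]]].
  destruct (smooth_bounds _ _ _ T (2 * L) SEr ltac:(lra) ltac:(lra) ltac:(lra)) as [Bp [HBp [Bp0 [Bp1 Bp2]]]].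
  destruct (smooth_bounds _ _ _ T (2 * L) SEi ltac:(lra) ltac:(lra) ltac:(lra)) as [Bq [HBq [Bq0 [Bq1 Bq2]]]].
  destruct (smooth_bounds _ _ _ T (2 * L) SN ltac:(lra) ltac:(lra) ltac:(lra)) as [BNs [HBNs [BN0 [_ _]]]].
  destruct (smooth_bounds _ _ _ T (2 * L) SV ltac:(lra) ltac:(lra) ltac:(lra)) as [BVs [HBVs [_ [BV1 _]]]].
  set (B := Bp + Bq).
  set (mb := L * (2 * B ^ 2)).
  set (BVx := BVs + 2 * CV * L).
  set (Hb := L * (2 * B ^ 2 + BNs * (2 * B ^ 2) + / 2 * BNs ^ 2 + / 2 * BVx ^ 2)).
  set (BNV := 4 * (Hb + mb ^ 2 / L + 8 * mb ^ 2 * (mb + 1))).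
  assert (HB : 0 <= B) by (unfold B; lra).
  assert (HBNV : 0 <= BNV).
  { unfold BNV, Hb, mb, BVx. pose proof (sq_nn B). pose proof (sq_nn BNs).
    pose proof (sq_nn (BVs + 2 * CV * L)). pose proof (sq_nn (L * (2 * B ^ 2))).
    assert (0 <= L * (2 * B ^ 2)) by (apply Rmult_le_pos; nra).
    assert (0 <= / L) by (left; apply Rinv_0_lt_compat; lra).
    assert (0 <= BNs * (2 * B ^ 2)) by nra.
    assert (0 <= (L * (2 * B ^ 2)) ^ 2 / L) by (apply Rmult_le_pos; auto).
    assert (0 <= 8 * (L * (2 * B ^ 2)) ^ 2 * (L * (2 * B ^ 2) + 1)) by (apply Rmult_le_pos; nra).
    assert (0 <= L * (2 * B ^ 2 + BNs * (2 * B ^ 2) + / 2 * BNs ^ 2 + / 2 * (BVs + 2 * CV * L) ^ 2)) by (apply Rmult_le_pos; lra).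
    lra. }
  exists ((BNV + BNV) * (/ L + 5) + 1 + 7 * B ^ 2), 1.
  split.
  { pose proof (sq_nn B). assert (0 <= / L) by (left; apply Rinv_0_lt_compat; lra).
    assert (0 <= (BNV + BNV) * (/ L + 5)) by (apply Rmult_le_pos; lra). lra. }
  split; [lra|].
  intros K M Es Ns Vs HK HM dx dt _ _ Hperiodic Hscheme HE0 HN0 HV0 Htau m Hm.
  assert (HKr : 1 <= INR K) by (apply (le_INR 1); lia).
  assert (HMr : 1 <= INR M) by (apply (le_INR 1); lia).
  assert (Hdx : 0 < dx) by (unfold dx; apply Rdiv_lt_0_compat; lra).
  assert (Hdt : 0 < dt) by (unfold dt; apply Rdiv_lt_0_compat; lra).
  assert (HLK : L = INR K * dx) by (unfold dx; field; lra).
  assert (HTM : T = INR M * dt) by (unfold dt; field; lra).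
  assert (HdxL : dx <= L) by nra.
  assert (Htj : forall j, (j <= M)%nat -> 0 <= INR j * dt <= T).
  { intros j Hj. split. apply Rmult_le_pos; [apply pos_INR | lra].
    rewrite HTM. apply Rmult_le_compat_r; [lra|]. apply le_INR; auto. }
  clearbody dx dt.
  assert (Hdx0 : dx <> 0) by lra. assert (Hdt0 : dt <> 0) by lra.
  assert (Pp : forall j, per K (fun k => fst (Es j k))) by (intros j k; destruct (Hperiodic j) as [H _]; rewrite H; auto).
  assert (Pq : forall j, per K (fun k => snd (Es j k))) by (intros j k; destruct (Hperiodic j) as [H _]; rewrite H; auto).
  assert (PN : forall j, per K (Ns j)) by (intros j k; destruct (Hperiodic j) as [_ [H _]]; apply H).
  assert (PV : forall j, per K (Vs j)) by (intros j k; destruct (Hperiodic j) as [_ [_ H]]; apply H).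
  assert (Hshift : forall k, IZR (k + Z.of_nat K) * dx = IZR k * dx + L) by (intro k; rewrite plus_IZR, IZR_nat, HLK; ring).
  assert (HexE : forall j k, (j <= M)%nat -> exactC dt dx E j (k + Z.of_nat K) = exactC dt dx E j k).
  { intros j k Hj. unfold exactC. rewrite Hshift. apply (proj1 (Hper _ _ (Htj j Hj))). }
  assert (HexN : forall j k, (j <= M)%nat -> exactR dt dx N j (k + Z.of_nat K) = exactR dt dx N j k).
  { intros j k Hj. unfold exactR. rewrite Hshift. apply (proj1 (proj2 (Hper _ _ (Htj j Hj)))). }
  assert (HexV : forall j k, (j <= M)%nat -> exactR dt dx V j (k + Z.of_nat K) = exactR dt dx V j k).
  { intros j k Hj. unfold exactR. rewrite Hshift. apply (proj2 (proj2 (Hper _ _ (Htj j Hj)))). }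
  assert (Hcons : forall j, (j <= M)%nat ->
    mass K (fun k => fst (Es j k)) (fun k => snd (Es j k)) = mass K (fun k => fst (Es 0%nat k)) (fun k => snd (Es 0%nat k)) /\
    energy K dx (fun k => fst (Es j k)) (fun k => snd (Es j k)) (Ns j) (Vs j)
      = energy K dx (fun k => fst (Es 0%nat k)) (fun k => snd (Es 0%nat k)) (Ns 0%nat) (Vs 0%nat)).
  { induction j; intro Hj. split; auto.
    destruct IHj as [IH1 IH2]. lia.
    destruct (conserve K dx dt (fun k => fst (Es j k)) (fun k => snd (Es j k)) (Ns j) (Vs j)
      (fun k => fst (Es (S j) k)) (fun k => snd (Es (S j) k)) (Ns (S j)) (Vs (S j))) as [C1 C2]; auto;
      try (intro k; destruct (scheme_real M dt dx Es Ns Vs Hdt0 Hdx0 Hscheme j k ltac:(lia)) as [S1 [S2 [S3 S4]]]; auto).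
    rewrite C1, C2. auto. }
  assert (GB : forall j, (j <= M)%nat ->
    (forall k, Rabs (fst (exactC dt dx E j k)) <= B) /\ (forall k, Rabs (snd (exactC dt dx E j k)) <= B) /\
    (forall k, Rabs (dX dx (fun i => fst (exactC dt dx E j i)) k) <= B) /\
    (forall k, Rabs (dX dx (fun i => snd (exactC dt dx E j i)) k) <= B)).
  { intros j Hj. pose proof (Htj j Hj) as Ht.
    assert (PR : per K (fun k => ReF E (INR j * dt) (IZR k * dx))).
    { intro k. unfold ReF. change (fst (exactC dt dx E j (k + Z.of_nat K)) = fst (exactC dt dx E j k)). rewrite HexE; auto. }
    assert (PI : per K (fun k => ImF E (INR j * dt) (IZR k * dx))).
    { intro k. unfold ImF. change (snd (exactC dt dx E j (k + Z.of_nat K)) = snd (exactC dt dx E j k)). rewrite HexE; auto. }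
    destruct (grid_bounds (ReF E) Bp K dx L (INR j * dt) (fun x Hx => Bp0 _ x Ht Hx)
      (fun x h Hx Hh Hxh => Bp1 _ x h Ht Hx Hh Hxh) HK Hdx HLK PR) as [G1 G2].
    destruct (grid_bounds (ImF E) Bq K dx L (INR j * dt) (fun x Hx => Bq0 _ x Ht Hx)
      (fun x h Hx Hh Hxh => Bq1 _ x h Ht Hx Hh Hxh) HK Hdx HLK PI) as [G3 G4].
    unfold B. split; [|split; [|split]]; intro k.
    - specialize (G1 k). unfold ReF in G1. change (Rabs (fst (exactC dt dx E j k)) <= Bp) in G1. lra.
    - specialize (G3 k). unfold ImF in G3. change (Rabs (snd (exactC dt dx E j k)) <= Bq) in G3. lra.
    - specialize (G2 k). unfold ReF in G2. change (Rabs (dX dx (fun i => fst (exactC dt dx E j i)) k) <= Bp) in G2. lra.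
    - specialize (G4 k). unfold ImF in G4. change (Rabs (dX dx (fun i => snd (exactC dt dx E j i)) k) <= Bq) in G4. lra. }
  assert (GT : forall j, (j < M)%nat ->
    (forall k, Rabs ((fst (exactC dt dx E (S j) k) - fst (exactC dt dx E j k)) / dt) <= B) /\
    (forall k, Rabs ((snd (exactC dt dx E (S j) k) - snd (exactC dt dx E j k)) / dt) <= B)).
  { intros j Hj. pose proof (Htj j ltac:(lia)) as Ht. pose proof (Htj (S j) ltac:(lia)) as Ht'.
    assert (Edt : INR (S j) * dt - INR j * dt = dt) by (rewrite S_INR; ring).
    split.
    - intro k. pose proof (grid_tbound (ReF E) Bp K dx L (INR j * dt) (INR (S j) * dt)) as G.
      rewrite Edt in G. unfold ReF in G. unfold exactC.
      cut (Rabs ((fst (E (INR (S j) * dt) (IZR k * dx)) - fst (E (INR j * dt) (IZR k * dx))) / dt) <= Bp). unfold B; lra.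
      apply G; auto.
      + intros x Hx. pose proof (Bp2 (INR j * dt) (INR (S j) * dt) x (proj1 Ht) ltac:(rewrite S_INR; nra) (proj2 Ht') Hx) as B2'. rewrite Edt in B2'. exact B2'.
      + intro k'. rewrite Hshift, (proj1 (Hper _ _ Ht)), (proj1 (Hper _ _ Ht')). auto.
    - intro k. pose proof (grid_tbound (ImF E) Bq K dx L (INR j * dt) (INR (S j) * dt)) as G.
      rewrite Edt in G. unfold ImF in G. unfold exactC.
      cut (Rabs ((snd (E (INR (S j) * dt) (IZR k * dx)) - snd (E (INR j * dt) (IZR k * dx))) / dt) <= Bq). unfold B; lra.
      apply G; auto.
      + intros x Hx. pose proof (Bq2 (INR j * dt) (INR (S j) * dt) x (proj1 Ht) ltac:(rewrite S_INR; nra) (proj2 Ht') Hx) as B2'. rewrite Edt in B2'. exact B2'.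
      + intro k'. rewrite Hshift, (proj1 (Hper _ _ Ht)), (proj1 (Hper _ _ Ht')). auto. }
  assert (E0 : forall k, Es 0%nat k = exactC dt dx E 0 k).
  { intro k. rewrite HE0. unfold exactC. replace (INR 0 * dt) with 0 by (simpl; ring). auto. }
  assert (T0 : 0 <= 0 <= T) by lra.
  destruct (GB 0%nat ltac:(lia)) as [Ga0 [Gb0 [Gda0 Gdb0]]].
  assert (BNk : forall k, Rabs (Ns 0%nat k) <= BNs).
  { apply (per_all K (Ns 0%nat) (fun y => Rabs y <= BNs)); auto.
    intros i Hi. rewrite HN0, IZR_nat. apply BN0; auto. assert (INR i <= INR K) by (apply le_INR; lia).
    split. apply Rmult_le_pos; [apply pos_INR | lra]. nra. }
  assert (BVk : forall k, Rabs (dX dx (Vs 0%nat) k) <= BVx).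
  { apply (per_all K (dX dx (Vs 0%nat)) (fun y => Rabs y <= BVx)); auto.
    { intro k. unfold dX. rewrite (per_p1 _ _ (PV 0%nat)), (PV 0%nat). auto. }
    intros i Hi. unfold dX.
    assert (INR i <= INR K) by (apply le_INR; lia).
    assert (Hx0 : 0 <= INR i * dx) by (apply Rmult_le_pos; [apply pos_INR | lra]).
    pose proof (BV1 0 (INR i * dx) dx T0 Hx0 Hdx ltac:(nra)) as HV.
    pose proof (HV0 (Z.of_nat i + 1)%Z) as e1. pose proof (HV0 (Z.of_nat i)) as e0.
    rewrite plus_IZR, IZR_nat in e1. rewrite IZR_nat in e0.
    replace ((INR i + 1) * dx) with (INR i * dx + dx) in e1 by ring.
    set (u1 := Vs 0%nat (Z.of_nat i + 1)%Z) in *. set (u0 := Vs 0%nat (Z.of_nat i)) in *.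
    set (w1 := V 0 (INR i * dx + dx)) in *. set (w0 := V 0 (INR i * dx)) in *.
    replace ((u1 - u0) / dx) with ((w1 - w0) / dx + (u1 - w1 - (u0 - w0)) / dx) by (field; lra).
    eapply Rle_trans. apply Rabs_triang.
    assert (Rabs ((u1 - w1 - (u0 - w0)) / dx) <= 2 * CV * L).
    { unfold Rdiv. rewrite Rabs_mult, (Rabs_pos_eq (/ dx)) by (left; apply Rinv_0_lt_compat; lra).
      apply (Rmult_le_reg_r dx); auto. rewrite Rmult_assoc, Rinv_l, Rmult_1_r by lra.
      eapply Rle_trans. apply Rabs_triang. rewrite Rabs_Ropp.
      assert (CV * dx ^ 2 <= CV * L * dx) by (assert (0 <= CV * dx) by (apply Rmult_le_pos; lra); nra). nra. }
    unfold BVx. lra. }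
  assert (Hm0 : mass K (fun k => fst (Es 0%nat k)) (fun k => snd (Es 0%nat k)) * dx <= mb).
  { unfold mass, mb. rewrite HLK, (Rmult_comm (INR K) dx), Rmult_assoc, (Rmult_comm dx), <- sumR_const.
    apply Rmult_le_compat_r; [lra|]. apply sumR_le. intro k. rewrite E0.
    pose proof (sq_abs _ _ (Ga0 k)). pose proof (sq_abs _ _ (Gb0 k)). lra. }
  assert (HH0 : energy K dx (fun k => fst (Es 0%nat k)) (fun k => snd (Es 0%nat k)) (Ns 0%nat) (Vs 0%nat) * dx <= Hb).
  { rewrite energy_sum. unfold Hb. rewrite HLK, (Rmult_comm (INR K) dx), Rmult_assoc, (Rmult_comm dx), <- sumR_const.
    apply Rmult_le_compat_r; [lra|]. apply sumR_le. intro k.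
    assert (D1 : dX dx (fun k0 => fst (Es 0%nat k0)) k = dX dx (fun i => fst (exactC dt dx E 0 i)) k) by (unfold dX; rewrite !E0; auto).
    assert (D2' : dX dx (fun k0 => snd (Es 0%nat k0)) k = dX dx (fun i => snd (exactC dt dx E 0 i)) k) by (unfold dX; rewrite !E0; auto).
    rewrite D1, D2', E0.
    pose proof (sq_abs _ _ (Gda0 k)). pose proof (sq_abs _ _ (Gdb0 k)).
    pose proof (sq_abs _ _ (Ga0 k)). pose proof (sq_abs _ _ (Gb0 k)).
    pose proof (sq_abs _ _ (BNk k)). pose proof (sq_abs _ _ (BVk k)).
    set (g := fst (exactC dt dx E 0 k) ^ 2 + snd (exactC dt dx E 0 k) ^ 2).
    assert (0 <= g) by (unfold g; pose proof (sq_nn (fst (exactC dt dx E 0 k))); pose proof (sq_nn (snd (exactC dt dx E 0 k))); lra).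
    assert (Ns 0%nat k * g <= BNs * (2 * B ^ 2)).
    { pose proof (abs_b _ _ (BNk k)). 
      assert (Ns 0%nat k * g <= BNs * g) by (apply Rmult_le_compat_r; lra).
      assert (BNs * g <= BNs * (2 * B ^ 2)) by (apply Rmult_le_compat_l; unfold g in *; lra). lra. }
    lra. }
  assert (Hapr : forall j, (j <= M)%nat ->
    sumR K (fun k => Ns j k ^ 2) * dx <= BNV /\ sumR K (fun k => dX dx (Vs j) k ^ 2) * dx <= BNV).
  { intros j Hj. destruct (Hcons j Hj) as [C1 C2].
    apply (apriori K dx L (fun k => fst (Es j k)) (fun k => snd (Es j k)) (Ns j) (Vs j) Hb mb); auto.
    rewrite C2; auto. rewrite C1; auto. }
  assert (PerrE : forall j, (j <= M)%nat -> forall k, errC Es (exactC dt dx E) j (k + Z.of_nat K) = errC Es (exactC dt dx E) j k).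
  { intros j Hj k. unfold errC. rewrite HexE by auto. destruct (Hperiodic j) as [H _]. rewrite H. auto. }
  assert (PfE : forall j, (j <= M)%nat -> per K (fun k => fst (errC Es (exactC dt dx E) j k))) by (intros j Hj k; rewrite PerrE; auto).
  assert (PsE : forall j, (j <= M)%nat -> per K (fun k => snd (errC Es (exactC dt dx E) j k))) by (intros j Hj k; rewrite PerrE; auto).
  assert (PfX : forall j, (j <= M)%nat -> per K (fun k => fst (exactC dt dx E j k))) by (intros j Hj k; rewrite HexE; auto).
  assert (PsX : forall j, (j <= M)%nat -> per K (fun k => snd (exactC dt dx E j k))) by (intros j Hj k; rewrite HexE; auto).
  assert (Pv : forall j, (j <= M)%nat -> per K (errR Vs (exactR dt dx V) j)) by (intros j Hj k; unfold errR; rewrite (PV j), HexV; auto).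
  assert (PerTau : forall k, tauE dt dx E N m (k + Z.of_nat K) = tauE dt dx E N m k).
  { intro k. unfold tauE, dtpC, dx2C, mutC, mutR. cbv zeta.
    replace (k + Z.of_nat K + 1)%Z with (k + 1 + Z.of_nat K)%Z by ring.
    replace (k + Z.of_nat K - 1)%Z with (k - 1 + Z.of_nat K)%Z by ring.
    rewrite !HexE, !HexN by lia. reflexivity. }
  assert (Ptr : per K (fun k => fst (tauE dt dx E N m k))) by (intro k; rewrite PerTau; auto).
  assert (Pti : per K (fun k => snd (tauE dt dx E N m k))) by (intro k; rewrite PerTau; auto).
  destruct (Htau m Hm) as [T1 [T2 [T3 _]]].
  assert (Htb : 0 <= c0 * (dt ^ 2 + dx ^ 2)) by (pose proof (sq_nn dt); pose proof (sq_nn dx); apply Rmult_le_pos; lra).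
  assert (Q1 : sumR K (fun k => fst (tauE dt dx E N m k) ^ 2 + snd (tauE dt dx E N m k) ^ 2) * dx <= (c0 * (dt ^ 2 + dx ^ 2)) ^ 2).
  { rewrite <- normC_sq by lra. apply pow_incr. split; auto. apply sqrt_pos. }
  assert (Q2 : sumR K (fun k => dX dx (fun i => fst (tauE dt dx E N m i)) k ^ 2 + dX dx (fun i => snd (tauE dt dx E N m i)) k ^ 2) * dx <= (c0 * (dt ^ 2 + dx ^ 2)) ^ 2).
  { rewrite (sumR_ext _ _ (fun k => fst (dxpC dx (tauE dt dx E N m) k) ^ 2 + snd (dxpC dx (tauE dt dx E N m) k) ^ 2)).
    rewrite <- normC_sq by lra. apply pow_incr. split; auto. apply sqrt_pos.
    intro k. rewrite fst_dxpC, snd_dxpC by auto. auto. }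
  assert (Q3 : sumR K (fun k => tauN dt dx N V m k ^ 2) * dx <= (c0 * (dt ^ 2 + dx ^ 2)) ^ 2).
  { rewrite <- normR_sq by lra. apply pow_incr. split; auto. apply sqrt_pos. }
  assert (EQ1 : forall k, - (snd (errC Es (exactC dt dx E) (S m) k) - snd (errC Es (exactC dt dx E) m k)) / dt
      = - D2 dx (fun j => (fst (errC Es (exactC dt dx E) (S m) j) + fst (errC Es (exactC dt dx E) m j)) / 2) k
      + (Ns (S m) k + Ns m k) / 2 * ((fst (errC Es (exactC dt dx E) (S m) k) + fst (errC Es (exactC dt dx E) m k)) / 2)
      + (errR Ns (exactR dt dx N) (S m) k + errR Ns (exactR dt dx N) m k) / 2 * ((fst (exactC dt dx E (S m) k) + fst (exactC dt dx E m k)) / 2)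
      - fst (tauE dt dx E N m k)).
  { intro k. destruct (scheme_real M dt dx Es Ns Vs Hdt0 Hdx0 Hscheme m k Hm) as [S1 _].
    rewrite tauE_fst by auto. unfold errC, errR, D2 in *. cbv beta in *. cbn [fst snd Cminus Cplus Copp] in *. lra. }
  assert (EQ2 : forall k, (fst (errC Es (exactC dt dx E) (S m) k) - fst (errC Es (exactC dt dx E) m k)) / dt
      = - D2 dx (fun j => (snd (errC Es (exactC dt dx E) (S m) j) + snd (errC Es (exactC dt dx E) m j)) / 2) k
      + (Ns (S m) k + Ns m k) / 2 * ((snd (errC Es (exactC dt dx E) (S m) k) + snd (errC Es (exactC dt dx E) m k)) / 2)
      + (errR Ns (exactR dt dx N) (S m) k + errR Ns (exactR dt dx N) m k) / 2 * ((snd (exactC dt dx E (S m) k) + snd (exactC dt dx E m k)) / 2)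
      - snd (tauE dt dx E N m k)).
  { intro k. destruct (scheme_real M dt dx Es Ns Vs Hdt0 Hdx0 Hscheme m k Hm) as [_ [S2 _]].
    rewrite tauE_snd by auto. unfold errC, errR, D2 in *. cbv beta in *. cbn [fst snd Cminus Cplus Copp] in *. lra. }
  assert (EQ3 : forall k, (Ns (S m) k - Ns m k) / dt = D2 dx (fun j => (Vs (S m) j + Vs m j) / 2) k).
  { intro k. destruct (scheme_real M dt dx Es Ns Vs Hdt0 Hdx0 Hscheme m k Hm) as [_ [_ [S3 _]]]. exact S3. }
  assert (EQ4 : forall k, (errR Ns (exactR dt dx N) (S m) k - errR Ns (exactR dt dx N) m k) / dt
      = D2 dx (fun j => (errR Vs (exactR dt dx V) (S m) j + errR Vs (exactR dt dx V) m j) / 2) k - tauN dt dx N V m k).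
  { intro k. pose proof (EQ3 k) as S3. unfold tauN, dtpR, dx2R, mutR, errR, D2 in *. lra. }
  destruct (GB m ltac:(lia)) as [Ba0 [Bb0 [Bda0 Bdb0]]].
  destruct (GB (S m) ltac:(lia)) as [Ba1 [Bb1 [Bda1 Bdb1]]].
  destruct (GT m Hm) as [Bta Btb].
  destruct (Hapr m ltac:(lia)) as [HN0' HV0']. destruct (Hapr (S m) ltac:(lia)) as [HN1' HV1'].
  pose proof (main_est K dx dt L
    (fun k => fst (errC Es (exactC dt dx E) m k)) (fun k => snd (errC Es (exactC dt dx E) m k))
    (fun k => fst (errC Es (exactC dt dx E) (S m) k)) (fun k => snd (errC Es (exactC dt dx E) (S m) k))
    (fun k => fst (exactC dt dx E m k)) (fun k => snd (exactC dt dx E m k))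
    (fun k => fst (exactC dt dx E (S m) k)) (fun k => snd (exactC dt dx E (S m) k))
    (Ns m) (Ns (S m)) (errR Ns (exactR dt dx N) m) (errR Ns (exactR dt dx N) (S m))
    (Vs m) (Vs (S m)) (errR Vs (exactR dt dx V) m) (errR Vs (exactR dt dx V) (S m))
    (fun k => fst (tauE dt dx E N m k)) (fun k => snd (tauE dt dx E N m k)) (tauN dt dx N V m)
    (c0 * (dt ^ 2 + dx ^ 2)) B BNV BNV HK Hdx Hdt HLK
    (PfE m ltac:(lia)) (PsE m ltac:(lia)) (PfE (S m) ltac:(lia)) (PsE (S m) ltac:(lia))
    (PfX m ltac:(lia)) (PsX m ltac:(lia)) (PfX (S m) ltac:(lia)) (PsX (S m) ltac:(lia))
    (PV m) (PV (S m)) (Pv m ltac:(lia)) (Pv (S m) ltac:(lia)) Ptr Pti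
    EQ1 EQ2 EQ3 EQ4 Q1 Q2 Q3 HN1' HN0' HV1' HV0' Ba1 Ba0 Bb1 Bb0 Bda1 Bda0 Bdb1 Bdb0 Bta Btb) as ME.
  cbv beta in ME.
  assert (GJ : forall j, normC K dx (dxpC dx (errC Es (exactC dt dx E) j)) ^ 2
     = sumR K (fun k => dX dx (fun i => fst (errC Es (exactC dt dx E) j i)) k ^ 2 + dX dx (fun i => snd (errC Es (exactC dt dx E) j i)) k ^ 2) * dx).
  { intro j. rewrite normC_sq by lra. f_equal. apply sumR_ext. intro k. rewrite fst_dxpC, snd_dxpC by auto. auto. }
  assert (EJ : forall j, err_energy K dt dx E N V Es Ns Vs j =
     sumR K (fun k => fst (errC Es (exactC dt dx E) j k) ^ 2 + snd (errC Es (exactC dt dx E) j k) ^ 2) * dx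
     + sumR K (fun k => dX dx (fun i => fst (errC Es (exactC dt dx E) j i)) k ^ 2 + dX dx (fun i => snd (errC Es (exactC dt dx E) j i)) k ^ 2) * dx
     + sumR K (fun k => errR Ns (exactR dt dx N) j k ^ 2) * dx
     + sumR K (fun k => dX dx (errR Vs (exactR dt dx V) j) k ^ 2) * dx).
  { intro j. unfold err_energy. cbv zeta. rewrite GJ, normC_sq, !normR_sq by lra. reflexivity. }
  unfold dtps. rewrite !GJ, !EJ, !Aterm_real.
  eapply final_alg. exact Hdt.
  - eapply Rle_trans; [| exact ME]. right. lra.
  - apply R_eq.
Qed.
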